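(* Let $r=\frac{e^2-1}{e^2+1}$ and let $\mathcal{F}=\alpha_F+\beta_F$ be the Funk–Finsler metric on $\mathbb{D}_K(1)=\{x\in\mathbb{R}^2:|x|<r\}$. Define $$\phi=\frac{(1-r^2)\big[(1-|x|^2)|\xi|^2+2\langle x,\xi\rangle^2\big]}{(r^2-|x|^2)(1-|x|^2)^2},$$ $$\psi=\frac{2(1-r^2)\langle x,\xi\rangle}{(1-|x|^2)^3(r^2-|x|^2)^2}\Big[(1-|x|^2)|\xi|^2(3r^2-2|x|^2-1)-2\langle x,\xi\rangle^2(1+|x|^2-2r^2)\Big],$$ $$\tau_k=\frac{(1-r^2)\big(x^k|\xi|^2-\xi^k\langle x,\xi\rangle\big)}{\mathcal{F}(r^2-|x|^2)^2(1-|x|^2)}.$$ Then the Riemann curvature of $\mathcal{F}$ is $$R^i_k=-\big(\delta^i_k\alpha_F^2-\alpha_F(\alpha_F)_{\xi^k}\xi^i\big)+\Big[3\Big(\frac{\phi}{2\mathcal{F}}\Big)^2-\frac{\psi}{2\mathcal{F}}\Big]\Big(\delta^i_k-\frac{\mathcal{F}_{\xi^k}}{\mathcal{F}}\xi^i\Big)+\tau_k\xi^i,$$ and the Ricci curvature $\mathrm{Ric}=R^i_i$ and flag curvature $\mathbf{K}$ satisfy $$\mathrm{Ric}=\mathbf{K}\,\mathcal{F}^2=3\Big(\frac{\phi}{2\mathcal{F}}\Big)^2-\frac{\psi}{2\mathcal{F}}-\alpha_F^2.$$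
   Context: $\alpha_F(x,\xi)=\frac{\sqrt{(r^2-|x|^2)|\xi|^2+\langle x,\xi\rangle^2}}{r^2-|x|^2}$, $\beta_F(x,\xi)=\frac{(1-r^2)\langle x,\xi\rangle}{(r^2-|x|^2)(1-|x|^2)}$, $\mathcal{F}=\alpha_F+\beta_F$; subscripts $\xi^k$ denote partial derivatives in $\xi^k$. Spray coefficients: $G^i=\frac14g^{i\ell}\{[F^2]_{x^k\xi^\ell}\xi^k-[F^2]_{x^\ell}\}$ with $g_{ij}=\frac12\partial_{\xi^i}\partial_{\xi^j}F^2$. Riemann curvature: $R^i_k=2\frac{\partial G^i}{\partial x^k}-\xi^j\frac{\partial^2G^i}{\partial x^j\partial\xi^k}+2G^j\frac{\partial^2G^i}{\partial\xi^j\partial\xi^k}-\frac{\partial G^i}{\partial\xi^j}\frac{\partial G^j}{\partial\xi^k}$. Ricci curvature $\mathrm{Ric}=R^i_i$. The flag curvature $\mathbf{K}(x,\xi)$ of a 2-dimensional Finsler metric is the function with $\mathrm{Ric}=\mathbf{K}F^2$ (equivalently $\mathbf{K}=g_\xi(R_\xi u,u)/(g_\xi(\xi,\xi)g_\xi(u,u)-g_\xi(\xi,u)^2)$ for any $u$ not parallel to $\xi$). *)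

(* Defs.v *)
From Stdlib Require Import Reals.
From Coquelicot Require Import Coquelicot.
Open Scope R_scope.

(* A point of the tangent bundle T D: z 0 = x^1, z 1 = x^2, z 2 = xi^1, z 3 = xi^2
   (indices are 0-based: k in {0,1}). *)
Definition pt := nat -> R.

Definition upd (z : pt) (j : nat) (t : R) : pt :=
  fun m => if Nat.eqb m j then t else z m.

Definition pd (j : nat) (f : pt -> R) (z : pt) : R :=
  Derive (fun t => f (upd z j t)) (z j).

Definition xc (k : nat) (z : pt) : R := z k.
Definition yc (k : nat) (z : pt) : R := z (2 + k)%nat.

Definition sum2 (f : nat -> R) : R := f 0%nat + f 1%nat.
Definition delta (i k : nat) : R := if Nat.eqb i k then 1 else 0.

Definition rK : R := (exp 2 - 1) / (exp 2 + 1).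

Definition nx2 (z : pt) : R := xc 0 z ^ 2 + xc 1 z ^ 2.
Definition ny2 (z : pt) : R := yc 0 z ^ 2 + yc 1 z ^ 2.
Definition xy (z : pt) : R := xc 0 z * yc 0 z + xc 1 z * yc 1 z.

Definition alphaF (z : pt) : R :=
  sqrt ((rK ^ 2 - nx2 z) * ny2 z + xy z ^ 2) / (rK ^ 2 - nx2 z).
Definition betaF (z : pt) : R :=
  (1 - rK ^ 2) * xy z / ((rK ^ 2 - nx2 z) * (1 - nx2 z)).
Definition FF (z : pt) : R := alphaF z + betaF z.
Definition FF2 (z : pt) : R := FF z ^ 2.

Definition gF (i j : nat) (z : pt) : R := / 2 * pd (2 + i) (pd (2 + j) FF2) z.
Definition detg (z : pt) : R := gF 0 0 z * gF 1 1 z - gF 0 1 z * gF 1 0 z.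
Definition ginv (i j : nat) (z : pt) : R :=
  match i, j with
  | 0%nat, 0%nat => gF 1 1 z / detg z
  | 0%nat, _ => - gF 0 1 z / detg z
  | _, 0%nat => - gF 1 0 z / detg z
  | _, _ => gF 0 0 z / detg z
  end.

Definition Gsp (i : nat) (z : pt) : R :=
  / 4 * sum2 (fun l => ginv i l z *
     (sum2 (fun k => pd k (pd (2 + l) FF2) z * yc k z) - pd l FF2 z)).

Definition Riem (i k : nat) (z : pt) : R :=
  2 * pd k (Gsp i) z
  - sum2 (fun j => yc j z * pd j (pd (2 + k) (Gsp i)) z)
  + 2 * sum2 (fun j => Gsp j z * pd (2 + j) (pd (2 + k) (Gsp i)) z)
  - sum2 (fun j => pd (2 + j) (Gsp i) z * pd (2 + k) (Gsp j) z).

Definition Ric (z : pt) : R := sum2 (fun i => Riem i i z).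

(* flag curvature of the 2-dimensional metric: the function K with Ric = K F^2 *)
Definition flagK (z : pt) : R := Ric z / FF z ^ 2.

Definition phiF (z : pt) : R :=
  (1 - rK ^ 2) * ((1 - nx2 z) * ny2 z + 2 * xy z ^ 2)
  / ((rK ^ 2 - nx2 z) * (1 - nx2 z) ^ 2).

Definition psiF (z : pt) : R :=
  2 * (1 - rK ^ 2) * xy z / ((1 - nx2 z) ^ 3 * (rK ^ 2 - nx2 z) ^ 2)
  * ((1 - nx2 z) * ny2 z * (3 * rK ^ 2 - 2 * nx2 z - 1)
     - 2 * xy z ^ 2 * (1 + nx2 z - 2 * rK ^ 2)).

Definition tauF (k : nat) (z : pt) : R :=
  (1 - rK ^ 2) * (xc k z * ny2 z - yc k z * xy z)
  / (FF z * (rK ^ 2 - nx2 z) ^ 2 * (1 - nx2 z)).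

(* Main.v *)
Require Import Defs.
From Stdlib Require Import Reals Lra Lia Field FunctionalExtensionality.
From Coquelicot Require Import Coquelicot.
Open Scope R_scope.

Definition isd (f : pt -> R) (d : nat) (w : pt) (l : R) :=
  is_derive (fun t => f (upd w d t)) (w d) l.

Lemma upd_same w d : upd w d (w d) = w.
Proof. apply functional_extensionality; intro m; unfold upd.
 destruct (Nat.eqb_spec m d); subst; auto. Qed.

Lemma isd_pd f d w l : isd f d w l -> pd d f w = l.
Proof. intro H; apply is_derive_unique; exact H. Qed.

Lemma isd_val f d w l l' : isd f d w l -> l = l' -> isd f d w l'.
Proof. intros; subst; auto. Qed.

Lemma isd_const c d w : isd (fun _ => c) d w 0.
Proof. unfold isd; apply (is_derive_const c). Qed.

Lemma isd_coord j d w : isd (fun v => v j) d w (delta d j).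
Proof. unfold isd, upd, delta. destruct (Nat.eqb_spec j d) as [->|ne].
 rewrite Nat.eqb_refl. apply (is_derive_id (w d)).
 assert (E: Nat.eqb d j = false) by (apply Nat.eqb_neq; congruence). rewrite E.
 apply (is_derive_const (w j)). Qed.

Lemma isd_plus f g d w a b : isd f d w a -> isd g d w b -> isd (fun v => f v + g v) d w (a + b).
Proof. unfold isd; intros H1 H2. exact (is_derive_plus _ _ _ _ _ H1 H2). Qed.

Lemma isd_minus f g d w a b : isd f d w a -> isd g d w b -> isd (fun v => f v - g v) d w (a - b).
Proof. unfold isd; intros H1 H2. exact (is_derive_minus _ _ _ _ _ H1 H2). Qed.

Lemma isd_mult f g d w a b : isd f d w a -> isd g d w b -> isd (fun v => f v * g v) d w (a * g w + f w * b).
Proof. unfold isd; intros H1 H2. pose proof (is_derive_mult _ _ _ _ _ H1 H2 Rmult_comm) as H.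
 cbv beta in H. rewrite !upd_same in H. exact H. Qed.

Lemma isd_div f g d w a b : isd f d w a -> isd g d w b -> g w <> 0 ->
  isd (fun v => f v / g v) d w ((a - (f w / g w) * b) / g w).
Proof. unfold isd; intros H1 H2 Hg. rewrite <- (upd_same w d) in Hg.
 pose proof (is_derive_div _ _ _ _ _ H1 H2 Hg) as H. cbv beta in H. rewrite !upd_same in H, Hg.
 replace ((a - (f w / g w) * b) / g w) with ((a * g w - f w * b) / g w ^ 2) by (field; auto).
 exact H. Qed.

Lemma isd_sqrt f d w a : isd f d w a -> 0 < f w ->
  isd (fun v => sqrt (f v)) d w (a / (2 * sqrt (f w))).
Proof. unfold isd; intros H1 Hf. rewrite <- (upd_same w d) in Hf.
 pose proof (is_derive_sqrt _ _ _ H1 Hf) as H. cbv beta in H. rewrite !upd_same in H. exact H. Qed.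

Lemma isd_ext f g d w l : (forall v, f v = g v) -> isd g d w l -> isd f d w l.
Proof. unfold isd; intros E H. apply (is_derive_ext (fun t => g (upd w d t))); [intro; rewrite E; auto|exact H]. Qed.

Lemma isd_cont f d w l : isd f d w l -> continuity_pt (fun t => f (upd w d t)) (w d).
Proof. intro H. apply continuity_pt_filterlim. apply (ex_derive_continuous (fun t => f (upd w d t))).
 exists l; exact H. Qed.

Lemma loc_pos f d w l : isd f d w l -> 0 < f w -> locally (w d) (fun t => 0 < f (upd w d t)).
Proof. intros H Hp. apply isd_cont in H. rewrite continuity_pt_locally in H.
 specialize (H (mkposreal _ Hp)). simpl in H. rewrite upd_same in H.
 eapply filter_imp; [|exact H]. intros t Ht. apply Rabs_lt_between in Ht. lra. Qed.

Definition UU (w : pt) := nx2 w < rK ^ 2 /\ 0 < ny2 w.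

Definition Dn (w : pt) d := 2 * (w 0%nat * delta d 0 + w 1%nat * delta d 1).
Definition Dm (w : pt) d := 2 * (w 2%nat * delta d 2 + w 3%nat * delta d 3).
Definition Dp (w : pt) d := delta d 0 * w 2%nat + delta d 1 * w 3%nat + w 0%nat * delta d 2 + w 1%nat * delta d 3.
Definition DDn (d e : nat) := 2 * (delta d 0 * delta e 0 + delta d 1 * delta e 1).
Definition DDm (d e : nat) := 2 * (delta d 2 * delta e 2 + delta d 3 * delta e 3).
Definition DDp (d e : nat) := delta d 0 * delta e 2 + delta d 1 * delta e 3 + delta e 0 * delta d 2 + delta e 1 * delta d 3.


Ltac leaf := fail.
Ltac dt :=
  match goal with
  | |- isd (fun _ => ?c) _ _ _ => apply isd_const
  | |- isd (fun v => v ?j) _ _ _ => apply isd_coord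
  | |- isd (fun v => @?a v + @?b v) _ _ _ => apply (isd_plus a b); dt
  | |- isd (fun v => @?a v - @?b v) _ _ _ => apply (isd_minus a b); dt
  | |- isd (fun v => @?a v * @?b v) _ _ _ => apply (isd_mult a b); dt
  | |- isd (fun v => @?a v / @?b v) _ _ _ => apply (isd_div a b); [dt| dt |]
  | |- isd (fun v => sqrt (@?a v)) _ _ _ => apply (isd_sqrt a); [dt|]
  | |- isd (fun v => @?a v ^ 2) _ _ _ =>
      apply (isd_ext _ (fun v => a v * a v)); [intro; simpl; ring|]; apply (isd_mult a a); dt
  | |- isd (fun v => - @?a v) _ _ _ =>
      apply (isd_ext _ (fun v => 0 - a v)); [intro; ring|]; apply (isd_minus (fun _ => 0) a); dt
  | _ => leaf
  end.

Ltac D := eapply isd_val; [dt|].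

Lemma isd_nx2 d w : isd nx2 d w (Dn w d).
Proof. apply (isd_ext _ (fun v => v 0%nat ^ 2 + v 1%nat ^ 2)); [reflexivity|].
 D. unfold Dn, delta; ring. Qed.

Lemma isd_ny2 d w : isd ny2 d w (Dm w d).
Proof. apply (isd_ext _ (fun v => v 2%nat ^ 2 + v 3%nat ^ 2)); [reflexivity|].
 D. unfold Dm, delta; ring. Qed.

Lemma isd_xy d w : isd xy d w (Dp w d).
Proof. apply (isd_ext _ (fun v => v 0%nat * v 2%nat + v 1%nat * v 3%nat)); [reflexivity|].
 D. unfold Dp, delta; ring. Qed.

Lemma isd_Dn d e w : isd (fun v => Dn v d) e w (DDn d e).
Proof. unfold Dn. D. unfold DDn, delta; ring. Qed.
Lemma isd_Dm d e w : isd (fun v => Dm v d) e w (DDm d e).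
Proof. unfold Dm. D. unfold DDm, delta; ring. Qed.
Lemma isd_Dp d e w : isd (fun v => Dp v d) e w (DDp d e).
Proof. unfold Dp. D. unfold DDp, delta; ring. Qed.

Definition AA (w : pt) := rK ^ 2 - nx2 w.
Definition BB (w : pt) := 1 - nx2 w.
Definition cc := 1 - rK ^ 2.
Definition DA (w : pt) d := - Dn w d.
Definition DDA (d e : nat) := - DDn d e.
Definition QQ (w : pt) := AA w * ny2 w + xy w ^ 2.
Definition sq (w : pt) := sqrt (QQ w).
Definition DQ (w : pt) d := DA w d * ny2 w + AA w * Dm w d + 2 * xy w * Dp w d.
Definition DDQ (w : pt) d e := DDA d e * ny2 w + DA w d * Dm w e + DA w e * Dm w d + AA w * DDm d e
   + 2 * Dp w e * Dp w d + 2 * xy w * DDp d e.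
Definition Ds (w : pt) d := DQ w d / (2 * sq w).
Definition DDs (w : pt) d e := (DDQ w d e - Ds w d * 2 * Ds w e) / (2 * sq w).
Definition uu (w : pt) := cc * xy w / BB w.
Definition Du (w : pt) d := (cc * Dp w d - uu w * DA w d) / BB w.
Definition DDu (w : pt) d e := (cc * DDp d e - Du w e * DA w d - uu w * DDA d e - Du w d * DA w e) / BB w.
Definition Fc (w : pt) := (sq w + uu w) / AA w.
Definition DF (w : pt) d := (Ds w d + Du w d - Fc w * DA w d) / AA w.
Definition DDF (w : pt) d e := (DDs w d e + DDu w d e - DF w e * DA w d - Fc w * DDA d e - DF w d * DA w e) / AA w.
Definition MM (w : pt) := BB w * ny2 w + 2 * xy w ^ 2.
Definition DM (w : pt) d := DA w d * ny2 w + BB w * Dm w d + 4 * xy w * Dp w d.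
Definition DDM (w : pt) d e := DDA d e * ny2 w + DA w d * Dm w e + DA w e * Dm w d + BB w * DDm d e
   + 4 * Dp w e * Dp w d + 4 * xy w * DDp d e.
Definition KK (w : pt) := AA w * BB w ^ 2.
Definition DK (w : pt) d := DA w d * BB w ^ 2 + 2 * AA w * BB w * DA w d.
Definition DDK (w : pt) d e := DDA d e * BB w ^ 2 + 2 * DA w d * BB w * DA w e + 2 * DA w e * BB w * DA w d
   + 2 * AA w * DA w e * DA w d + 2 * AA w * BB w * DDA d e.
Definition ph (w : pt) := cc * MM w / KK w.
Definition Dph (w : pt) d := (cc * DM w d - ph w * DK w d) / KK w.
Definition DDph (w : pt) d e := (cc * DDM w d e - Dph w e * DK w d - ph w * DDK w d e - Dph w d * DK w e) / KK w.
Definition Rq1 (w : pt) := xy w / AA w.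
Definition DRq1 (w : pt) d := (Dp w d - Rq1 w * DA w d) / AA w.
Definition DDRq1 (w : pt) d e := (DDp d e - DRq1 w e * DA w d - Rq1 w * DDA d e - DRq1 w d * DA w e) / AA w.
Definition Rq2 (w : pt) := ph w / (2 * Fc w).
Definition DRq2 (w : pt) d := (Dph w d - Rq2 w * 2 * DF w d) / (2 * Fc w).
Definition DDRq2 (w : pt) d e := (DDph w d e - DRq2 w e * 2 * DF w d - Rq2 w * 2 * DDF w d e - DRq2 w d * 2 * DF w e) / (2 * Fc w).
Definition PP (w : pt) := Rq1 w + Rq2 w.
Definition DP (w : pt) d := DRq1 w d + DRq2 w d.
Definition DDP (w : pt) d e := DDRq1 w d e + DDRq2 w d e.
Definition Dal (w : pt) d := (Ds w d - (sq w / AA w) * DA w d) / AA w.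

Lemma rK_bounds : 0 < rK /\ rK < 1.
Proof. unfold rK. assert (1 < exp 2). { rewrite <- exp_0. apply exp_increasing. lra. }
 split. apply Rdiv_lt_0_compat; lra. apply (Rmult_lt_reg_r (exp 2 + 1)). lra.
 unfold Rdiv; rewrite Rmult_assoc, Rinv_l; lra. Qed.

Lemma rK2_bounds : 0 < rK ^ 2 < 1.
Proof. destruct rK_bounds. split; nra. Qed.

Section Pos.
Variable w : pt.
Hypothesis H : UU w.
Lemma nx2_ge : 0 <= nx2 w. Proof. unfold nx2, xc; nra. Qed.
Lemma AA_pos : 0 < AA w. Proof. destruct H; unfold AA; lra. Qed.
Lemma BB_pos : 0 < BB w. Proof. destruct H; pose proof rK2_bounds; unfold BB; lra. Qed.
Lemma cc_pos : 0 < cc. Proof. pose proof rK2_bounds; unfold cc; lra. Qed.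
Lemma cc_lt : cc < BB w. Proof. destruct H; unfold cc, BB; lra. Qed.
Lemma QQ_pos : 0 < QQ w. Proof. destruct H. pose proof AA_pos. unfold QQ. nra. Qed.
Lemma sq_pos : 0 < sq w. Proof. apply sqrt_lt_R0, QQ_pos. Qed.
Lemma sq_sq : sq w ^ 2 = QQ w. Proof. unfold sq. simpl. rewrite Rmult_1_r. apply sqrt_sqrt. left; apply QQ_pos. Qed.
Lemma sq_gt : xy w < sq w /\ - xy w < sq w.
Proof. pose proof sq_pos; pose proof sq_sq; pose proof AA_pos. destruct H as [Hx1 Hx2].
 assert (xy w ^ 2 < sq w ^ 2) by (rewrite sq_sq; unfold QQ; nra). split; nra. Qed.
Lemma Fc_pos : 0 < Fc w.
Proof. pose proof AA_pos; pose proof BB_pos; pose proof cc_pos; pose proof cc_lt; pose proof sq_gt.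
 unfold Fc, uu. apply Rdiv_lt_0_compat; auto.
 assert (0 < BB w * sq w + cc * xy w).
 { pose proof sq_pos. destruct (Rle_or_lt 0 (xy w)).
   assert (0 < BB w * sq w) by (apply Rmult_lt_0_compat; lra).
   assert (0 <= cc * xy w) by (apply Rmult_le_pos; lra). lra.
   assert (0 < BB w * (sq w + xy w)) by (apply Rmult_lt_0_compat; lra).
   assert (0 <= (BB w - cc) * (- xy w)) by (apply Rmult_le_pos; lra). nra. }
 replace (sq w + cc * xy w / BB w) with ((BB w * sq w + cc * xy w) / BB w) by (field; lra).
 apply Rdiv_lt_0_compat; auto. Qed.
Lemma KK_pos : 0 < KK w. Proof. pose proof AA_pos; pose proof BB_pos. unfold KK; apply Rmult_lt_0_compat; [lra|apply pow_lt; lra]. Qed.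
End Pos.

Ltac posf H := pose proof (AA_pos _ H); pose proof (BB_pos _ H); pose proof (sq_pos _ H);
  pose proof (Fc_pos _ H); pose proof (KK_pos _ H); pose proof (QQ_pos _ H).
Ltac nz := cbv beta; match goal with
  | |- _ <> 0 => apply Rgt_not_eq; (lra || nra)
  | |- 0 < _ => (lra || nra) end.

Lemma UU_loc w d : UU w -> locally (w d) (fun t => UU (upd w d t)).
Proof. intros [H1 H2].
 assert (L1 : locally (w d) (fun t => 0 < (fun v => rK ^ 2 - nx2 v) (upd w d t))).
 { apply (loc_pos (fun v => rK ^ 2 - nx2 v) d w (0 - Dn w d)).
   apply (isd_minus (fun _ => rK^2) nx2). apply isd_const. apply isd_nx2. lra. }
 assert (L2 : locally (w d) (fun t => 0 < ny2 (upd w d t))).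
 { apply (loc_pos ny2 d w (Dm w d)). apply isd_ny2. auto. }
 eapply filter_imp; [|exact (filter_and _ _ L1 L2)]. simpl. intros t [A B]; split; lra. Qed.

Lemma isd_ext_loc f g d w l : (forall v, UU v -> f v = g v) -> UU w -> isd g d w l -> isd f d w l.
Proof. unfold isd; intros E Hw H. apply (is_derive_ext_loc (fun t => g (upd w d t))); [|exact H].
 eapply filter_imp; [|exact (UU_loc w d Hw)]. intros t Ht. rewrite E; auto. Qed.

Lemma pd_ext_loc f g d w : (forall v, UU v -> f v = g v) -> UU w -> pd d f w = pd d g w.
Proof. unfold pd; intros E Hw. apply Derive_ext_loc.
 eapply filter_imp; [|exact (UU_loc w d Hw)]. intros t Ht. rewrite E; auto. Qed.
Ltac leaf ::= lazymatch goal with |- isd ?f _ _ _ => lazymatch f with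
  | nx2 => apply isd_nx2
  | (fun v => nx2 v) => apply isd_nx2
  | ny2 => apply isd_ny2
  | (fun v => ny2 v) => apply isd_ny2
  | xy => apply isd_xy
  | (fun v => xy v) => apply isd_xy
  | (fun v => Dn v ?x) => apply isd_Dn
  | (fun v => Dm v ?x) => apply isd_Dm
  | (fun v => Dp v ?x) => apply isd_Dp
  end end.
Lemma isd_AA d w : isd AA d w (DA w d).
Proof. unfold AA. D. all: cbv beta. all: try nz.
 unfold DA; ring. Qed.
Ltac leaf ::= lazymatch goal with |- isd ?f _ _ _ => lazymatch f with
  | nx2 => apply isd_nx2
  | (fun v => nx2 v) => apply isd_nx2
  | ny2 => apply isd_ny2
  | (fun v => ny2 v) => apply isd_ny2
  | xy => apply isd_xy
  | (fun v => xy v) => apply isd_xy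
  | (fun v => Dn v ?x) => apply isd_Dn
  | (fun v => Dm v ?x) => apply isd_Dm
  | (fun v => Dp v ?x) => apply isd_Dp
  | AA => apply isd_AA
  | (fun v => AA v) => apply isd_AA
  end end.
Lemma isd_BB d w : isd BB d w (DA w d).
Proof. unfold BB. D. all: cbv beta. all: try nz.
 unfold DA; ring. Qed.
Ltac leaf ::= lazymatch goal with |- isd ?f _ _ _ => lazymatch f with
  | nx2 => apply isd_nx2
  | (fun v => nx2 v) => apply isd_nx2
  | ny2 => apply isd_ny2
  | (fun v => ny2 v) => apply isd_ny2
  | xy => apply isd_xy
  | (fun v => xy v) => apply isd_xy
  | (fun v => Dn v ?x) => apply isd_Dn
  | (fun v => Dm v ?x) => apply isd_Dm
  | (fun v => Dp v ?x) => apply isd_Dp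
  | AA => apply isd_AA
  | (fun v => AA v) => apply isd_AA
  | BB => apply isd_BB
  | (fun v => BB v) => apply isd_BB
  end end.
Lemma isd_QQ d w : isd QQ d w (DQ w d).
Proof. unfold QQ. D. all: cbv beta. all: try nz.
 unfold DQ; ring. Qed.
Ltac leaf ::= lazymatch goal with |- isd ?f _ _ _ => lazymatch f with
  | nx2 => apply isd_nx2
  | (fun v => nx2 v) => apply isd_nx2
  | ny2 => apply isd_ny2
  | (fun v => ny2 v) => apply isd_ny2
  | xy => apply isd_xy
  | (fun v => xy v) => apply isd_xy
  | (fun v => Dn v ?x) => apply isd_Dn
  | (fun v => Dm v ?x) => apply isd_Dm
  | (fun v => Dp v ?x) => apply isd_Dp
  | AA => apply isd_AA
  | (fun v => AA v) => apply isd_AA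
  | BB => apply isd_BB
  | (fun v => BB v) => apply isd_BB
  | QQ => apply isd_QQ
  | (fun v => QQ v) => apply isd_QQ
  end end.
Lemma isd_sq d w : UU w -> isd sq d w (Ds w d).
Proof. intro H; posf H. unfold sq. D. all: cbv beta. all: try nz.
 unfold Ds, sq; reflexivity. Qed.
Ltac leaf ::= lazymatch goal with |- isd ?f _ _ _ => lazymatch f with
  | nx2 => apply isd_nx2
  | (fun v => nx2 v) => apply isd_nx2
  | ny2 => apply isd_ny2
  | (fun v => ny2 v) => apply isd_ny2
  | xy => apply isd_xy
  | (fun v => xy v) => apply isd_xy
  | (fun v => Dn v ?x) => apply isd_Dn
  | (fun v => Dm v ?x) => apply isd_Dm
  | (fun v => Dp v ?x) => apply isd_Dp
  | AA => apply isd_AA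
  | (fun v => AA v) => apply isd_AA
  | BB => apply isd_BB
  | (fun v => BB v) => apply isd_BB
  | QQ => apply isd_QQ
  | (fun v => QQ v) => apply isd_QQ
  | sq => (eapply isd_sq; eassumption)
  | (fun v => sq v) => (eapply isd_sq; eassumption)
  end end.
Lemma isd_uu d w : UU w -> isd uu d w (Du w d).
Proof. intro H; posf H. unfold uu. D. all: cbv beta. all: try nz.
 unfold Du, uu; field; repeat split; nz. Qed.
Ltac leaf ::= lazymatch goal with |- isd ?f _ _ _ => lazymatch f with
  | nx2 => apply isd_nx2
  | (fun v => nx2 v) => apply isd_nx2
  | ny2 => apply isd_ny2
  | (fun v => ny2 v) => apply isd_ny2
  | xy => apply isd_xy
  | (fun v => xy v) => apply isd_xy
  | (fun v => Dn v ?x) => apply isd_Dn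
  | (fun v => Dm v ?x) => apply isd_Dm
  | (fun v => Dp v ?x) => apply isd_Dp
  | AA => apply isd_AA
  | (fun v => AA v) => apply isd_AA
  | BB => apply isd_BB
  | (fun v => BB v) => apply isd_BB
  | QQ => apply isd_QQ
  | (fun v => QQ v) => apply isd_QQ
  | sq => (eapply isd_sq; eassumption)
  | (fun v => sq v) => (eapply isd_sq; eassumption)
  | uu => (eapply isd_uu; eassumption)
  | (fun v => uu v) => (eapply isd_uu; eassumption)
  end end.
Lemma isd_Fc d w : UU w -> isd Fc d w (DF w d).
Proof. intro H; posf H. unfold Fc. D. all: cbv beta. all: try nz.
 unfold DF, Fc; field; repeat split; nz. Qed.
Ltac leaf ::= lazymatch goal with |- isd ?f _ _ _ => lazymatch f with
  | nx2 => apply isd_nx2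
  | (fun v => nx2 v) => apply isd_nx2
  | ny2 => apply isd_ny2
  | (fun v => ny2 v) => apply isd_ny2
  | xy => apply isd_xy
  | (fun v => xy v) => apply isd_xy
  | (fun v => Dn v ?x) => apply isd_Dn
  | (fun v => Dm v ?x) => apply isd_Dm
  | (fun v => Dp v ?x) => apply isd_Dp
  | AA => apply isd_AA
  | (fun v => AA v) => apply isd_AA
  | BB => apply isd_BB
  | (fun v => BB v) => apply isd_BB
  | QQ => apply isd_QQ
  | (fun v => QQ v) => apply isd_QQ
  | sq => (eapply isd_sq; eassumption)
  | (fun v => sq v) => (eapply isd_sq; eassumption)
  | uu => (eapply isd_uu; eassumption)
  | (fun v => uu v) => (eapply isd_uu; eassumption)
  | Fc => (eapply isd_Fc; eassumption)
  | (fun v => Fc v) => (eapply isd_Fc; eassumption)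
  end end.
Lemma isd_MM d w : isd MM d w (DM w d).
Proof. unfold MM. D. all: cbv beta. all: try nz.
 unfold DM; ring. Qed.
Ltac leaf ::= lazymatch goal with |- isd ?f _ _ _ => lazymatch f with
  | nx2 => apply isd_nx2
  | (fun v => nx2 v) => apply isd_nx2
  | ny2 => apply isd_ny2
  | (fun v => ny2 v) => apply isd_ny2
  | xy => apply isd_xy
  | (fun v => xy v) => apply isd_xy
  | (fun v => Dn v ?x) => apply isd_Dn
  | (fun v => Dm v ?x) => apply isd_Dm
  | (fun v => Dp v ?x) => apply isd_Dp
  | AA => apply isd_AA
  | (fun v => AA v) => apply isd_AA
  | BB => apply isd_BB
  | (fun v => BB v) => apply isd_BB
  | QQ => apply isd_QQ
  | (fun v => QQ v) => apply isd_QQ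
  | sq => (eapply isd_sq; eassumption)
  | (fun v => sq v) => (eapply isd_sq; eassumption)
  | uu => (eapply isd_uu; eassumption)
  | (fun v => uu v) => (eapply isd_uu; eassumption)
  | Fc => (eapply isd_Fc; eassumption)
  | (fun v => Fc v) => (eapply isd_Fc; eassumption)
  | MM => apply isd_MM
  | (fun v => MM v) => apply isd_MM
  end end.
Lemma isd_KK d w : isd KK d w (DK w d).
Proof. unfold KK. D. all: cbv beta. all: try nz.
 unfold DK; ring. Qed.
Ltac leaf ::= lazymatch goal with |- isd ?f _ _ _ => lazymatch f with
  | nx2 => apply isd_nx2
  | (fun v => nx2 v) => apply isd_nx2
  | ny2 => apply isd_ny2
  | (fun v => ny2 v) => apply isd_ny2
  | xy => apply isd_xy
  | (fun v => xy v) => apply isd_xy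
  | (fun v => Dn v ?x) => apply isd_Dn
  | (fun v => Dm v ?x) => apply isd_Dm
  | (fun v => Dp v ?x) => apply isd_Dp
  | AA => apply isd_AA
  | (fun v => AA v) => apply isd_AA
  | BB => apply isd_BB
  | (fun v => BB v) => apply isd_BB
  | QQ => apply isd_QQ
  | (fun v => QQ v) => apply isd_QQ
  | sq => (eapply isd_sq; eassumption)
  | (fun v => sq v) => (eapply isd_sq; eassumption)
  | uu => (eapply isd_uu; eassumption)
  | (fun v => uu v) => (eapply isd_uu; eassumption)
  | Fc => (eapply isd_Fc; eassumption)
  | (fun v => Fc v) => (eapply isd_Fc; eassumption)
  | MM => apply isd_MM
  | (fun v => MM v) => apply isd_MM
  | KK => apply isd_KK
  | (fun v => KK v) => apply isd_KK
  end end.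
Lemma isd_ph d w : UU w -> isd ph d w (Dph w d).
Proof. intro H; posf H. unfold ph. D. all: cbv beta. all: try nz.
 unfold Dph, ph; field; repeat split; nz. Qed.
Ltac leaf ::= lazymatch goal with |- isd ?f _ _ _ => lazymatch f with
  | nx2 => apply isd_nx2
  | (fun v => nx2 v) => apply isd_nx2
  | ny2 => apply isd_ny2
  | (fun v => ny2 v) => apply isd_ny2
  | xy => apply isd_xy
  | (fun v => xy v) => apply isd_xy
  | (fun v => Dn v ?x) => apply isd_Dn
  | (fun v => Dm v ?x) => apply isd_Dm
  | (fun v => Dp v ?x) => apply isd_Dp
  | AA => apply isd_AA
  | (fun v => AA v) => apply isd_AA
  | BB => apply isd_BB
  | (fun v => BB v) => apply isd_BB
  | QQ => apply isd_QQ
  | (fun v => QQ v) => apply isd_QQ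
  | sq => (eapply isd_sq; eassumption)
  | (fun v => sq v) => (eapply isd_sq; eassumption)
  | uu => (eapply isd_uu; eassumption)
  | (fun v => uu v) => (eapply isd_uu; eassumption)
  | Fc => (eapply isd_Fc; eassumption)
  | (fun v => Fc v) => (eapply isd_Fc; eassumption)
  | MM => apply isd_MM
  | (fun v => MM v) => apply isd_MM
  | KK => apply isd_KK
  | (fun v => KK v) => apply isd_KK
  | ph => (eapply isd_ph; eassumption)
  | (fun v => ph v) => (eapply isd_ph; eassumption)
  end end.
Lemma isd_R1 d w : UU w -> isd Rq1 d w (DRq1 w d).
Proof. intro H; posf H. unfold Rq1. D. all: cbv beta. all: try nz.
 unfold DRq1, Rq1; field; repeat split; nz. Qed.
Ltac leaf ::= lazymatch goal with |- isd ?f _ _ _ => lazymatch f with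
  | nx2 => apply isd_nx2
  | (fun v => nx2 v) => apply isd_nx2
  | ny2 => apply isd_ny2
  | (fun v => ny2 v) => apply isd_ny2
  | xy => apply isd_xy
  | (fun v => xy v) => apply isd_xy
  | (fun v => Dn v ?x) => apply isd_Dn
  | (fun v => Dm v ?x) => apply isd_Dm
  | (fun v => Dp v ?x) => apply isd_Dp
  | AA => apply isd_AA
  | (fun v => AA v) => apply isd_AA
  | BB => apply isd_BB
  | (fun v => BB v) => apply isd_BB
  | QQ => apply isd_QQ
  | (fun v => QQ v) => apply isd_QQ
  | sq => (eapply isd_sq; eassumption)
  | (fun v => sq v) => (eapply isd_sq; eassumption)
  | uu => (eapply isd_uu; eassumption)
  | (fun v => uu v) => (eapply isd_uu; eassumption)
  | Fc => (eapply isd_Fc; eassumption)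
  | (fun v => Fc v) => (eapply isd_Fc; eassumption)
  | MM => apply isd_MM
  | (fun v => MM v) => apply isd_MM
  | KK => apply isd_KK
  | (fun v => KK v) => apply isd_KK
  | ph => (eapply isd_ph; eassumption)
  | (fun v => ph v) => (eapply isd_ph; eassumption)
  | Rq1 => (eapply isd_R1; eassumption)
  | (fun v => Rq1 v) => (eapply isd_R1; eassumption)
  end end.
Lemma isd_R2 d w : UU w -> isd Rq2 d w (DRq2 w d).
Proof. intro H; posf H. unfold Rq2. D. all: cbv beta. all: try nz.
 unfold DRq2, Rq2; field; repeat split; nz. Qed.
Ltac leaf ::= lazymatch goal with |- isd ?f _ _ _ => lazymatch f with
  | nx2 => apply isd_nx2
  | (fun v => nx2 v) => apply isd_nx2
  | ny2 => apply isd_ny2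
  | (fun v => ny2 v) => apply isd_ny2
  | xy => apply isd_xy
  | (fun v => xy v) => apply isd_xy
  | (fun v => Dn v ?x) => apply isd_Dn
  | (fun v => Dm v ?x) => apply isd_Dm
  | (fun v => Dp v ?x) => apply isd_Dp
  | AA => apply isd_AA
  | (fun v => AA v) => apply isd_AA
  | BB => apply isd_BB
  | (fun v => BB v) => apply isd_BB
  | QQ => apply isd_QQ
  | (fun v => QQ v) => apply isd_QQ
  | sq => (eapply isd_sq; eassumption)
  | (fun v => sq v) => (eapply isd_sq; eassumption)
  | uu => (eapply isd_uu; eassumption)
  | (fun v => uu v) => (eapply isd_uu; eassumption)
  | Fc => (eapply isd_Fc; eassumption)
  | (fun v => Fc v) => (eapply isd_Fc; eassumption)
  | MM => apply isd_MM
  | (fun v => MM v) => apply isd_MM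
  | KK => apply isd_KK
  | (fun v => KK v) => apply isd_KK
  | ph => (eapply isd_ph; eassumption)
  | (fun v => ph v) => (eapply isd_ph; eassumption)
  | Rq1 => (eapply isd_R1; eassumption)
  | (fun v => Rq1 v) => (eapply isd_R1; eassumption)
  | Rq2 => (eapply isd_R2; eassumption)
  | (fun v => Rq2 v) => (eapply isd_R2; eassumption)
  end end.
Lemma isd_PP d w : UU w -> isd PP d w (DP w d).
Proof. intro H; posf H. unfold PP. D. all: cbv beta. all: try nz.
 unfold DP; ring. Qed.
Ltac leaf ::= lazymatch goal with |- isd ?f _ _ _ => lazymatch f with
  | nx2 => apply isd_nx2
  | (fun v => nx2 v) => apply isd_nx2
  | ny2 => apply isd_ny2
  | (fun v => ny2 v) => apply isd_ny2
  | xy => apply isd_xy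
  | (fun v => xy v) => apply isd_xy
  | (fun v => Dn v ?x) => apply isd_Dn
  | (fun v => Dm v ?x) => apply isd_Dm
  | (fun v => Dp v ?x) => apply isd_Dp
  | AA => apply isd_AA
  | (fun v => AA v) => apply isd_AA
  | BB => apply isd_BB
  | (fun v => BB v) => apply isd_BB
  | QQ => apply isd_QQ
  | (fun v => QQ v) => apply isd_QQ
  | sq => (eapply isd_sq; eassumption)
  | (fun v => sq v) => (eapply isd_sq; eassumption)
  | uu => (eapply isd_uu; eassumption)
  | (fun v => uu v) => (eapply isd_uu; eassumption)
  | Fc => (eapply isd_Fc; eassumption)
  | (fun v => Fc v) => (eapply isd_Fc; eassumption)
  | MM => apply isd_MM
  | (fun v => MM v) => apply isd_MM
  | KK => apply isd_KK
  | (fun v => KK v) => apply isd_KK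
  | ph => (eapply isd_ph; eassumption)
  | (fun v => ph v) => (eapply isd_ph; eassumption)
  | Rq1 => (eapply isd_R1; eassumption)
  | (fun v => Rq1 v) => (eapply isd_R1; eassumption)
  | Rq2 => (eapply isd_R2; eassumption)
  | (fun v => Rq2 v) => (eapply isd_R2; eassumption)
  | PP => (eapply isd_PP; eassumption)
  | (fun v => PP v) => (eapply isd_PP; eassumption)
  end end.
Lemma isd_al d w : UU w -> isd (fun v => sq v / AA v) d w (Dal w d).
Proof. intro H; posf H. D. all: cbv beta. all: try nz.
 unfold Dal; field; repeat split; nz. Qed.
Ltac leaf ::= lazymatch goal with |- isd ?f _ _ _ => lazymatch f with
  | nx2 => apply isd_nx2
  | (fun v => nx2 v) => apply isd_nx2
  | ny2 => apply isd_ny2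
  | (fun v => ny2 v) => apply isd_ny2
  | xy => apply isd_xy
  | (fun v => xy v) => apply isd_xy
  | (fun v => Dn v ?x) => apply isd_Dn
  | (fun v => Dm v ?x) => apply isd_Dm
  | (fun v => Dp v ?x) => apply isd_Dp
  | AA => apply isd_AA
  | (fun v => AA v) => apply isd_AA
  | BB => apply isd_BB
  | (fun v => BB v) => apply isd_BB
  | QQ => apply isd_QQ
  | (fun v => QQ v) => apply isd_QQ
  | sq => (eapply isd_sq; eassumption)
  | (fun v => sq v) => (eapply isd_sq; eassumption)
  | uu => (eapply isd_uu; eassumption)
  | (fun v => uu v) => (eapply isd_uu; eassumption)
  | Fc => (eapply isd_Fc; eassumption)
  | (fun v => Fc v) => (eapply isd_Fc; eassumption)
  | MM => apply isd_MM
  | (fun v => MM v) => apply isd_MM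
  | KK => apply isd_KK
  | (fun v => KK v) => apply isd_KK
  | ph => (eapply isd_ph; eassumption)
  | (fun v => ph v) => (eapply isd_ph; eassumption)
  | Rq1 => (eapply isd_R1; eassumption)
  | (fun v => Rq1 v) => (eapply isd_R1; eassumption)
  | Rq2 => (eapply isd_R2; eassumption)
  | (fun v => Rq2 v) => (eapply isd_R2; eassumption)
  | PP => (eapply isd_PP; eassumption)
  | (fun v => PP v) => (eapply isd_PP; eassumption)
  | (fun v => sq v / AA v) => (eapply isd_al; eassumption)
  end end.
Lemma isd_DA d e w : isd (fun v => DA v d) e w (DDA d e).
Proof. unfold DA. D. all: cbv beta. all: try nz.
 unfold DDA; ring. Qed.
Ltac leaf ::= lazymatch goal with |- isd ?f _ _ _ => lazymatch f with
  | nx2 => apply isd_nx2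
  | (fun v => nx2 v) => apply isd_nx2
  | ny2 => apply isd_ny2
  | (fun v => ny2 v) => apply isd_ny2
  | xy => apply isd_xy
  | (fun v => xy v) => apply isd_xy
  | (fun v => Dn v ?x) => apply isd_Dn
  | (fun v => Dm v ?x) => apply isd_Dm
  | (fun v => Dp v ?x) => apply isd_Dp
  | AA => apply isd_AA
  | (fun v => AA v) => apply isd_AA
  | BB => apply isd_BB
  | (fun v => BB v) => apply isd_BB
  | QQ => apply isd_QQ
  | (fun v => QQ v) => apply isd_QQ
  | sq => (eapply isd_sq; eassumption)
  | (fun v => sq v) => (eapply isd_sq; eassumption)
  | uu => (eapply isd_uu; eassumption)
  | (fun v => uu v) => (eapply isd_uu; eassumption)
  | Fc => (eapply isd_Fc; eassumption)
  | (fun v => Fc v) => (eapply isd_Fc; eassumption)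
  | MM => apply isd_MM
  | (fun v => MM v) => apply isd_MM
  | KK => apply isd_KK
  | (fun v => KK v) => apply isd_KK
  | ph => (eapply isd_ph; eassumption)
  | (fun v => ph v) => (eapply isd_ph; eassumption)
  | Rq1 => (eapply isd_R1; eassumption)
  | (fun v => Rq1 v) => (eapply isd_R1; eassumption)
  | Rq2 => (eapply isd_R2; eassumption)
  | (fun v => Rq2 v) => (eapply isd_R2; eassumption)
  | PP => (eapply isd_PP; eassumption)
  | (fun v => PP v) => (eapply isd_PP; eassumption)
  | (fun v => sq v / AA v) => (eapply isd_al; eassumption)
  | (fun v => DA v ?x) => apply isd_DA
  end end.
Lemma isd_DQ d e w : isd (fun v => DQ v d) e w (DDQ w d e).
Proof. unfold DQ. D. all: cbv beta. all: try nz.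
 unfold DDQ; ring. Qed.
Ltac leaf ::= lazymatch goal with |- isd ?f _ _ _ => lazymatch f with
  | nx2 => apply isd_nx2
  | (fun v => nx2 v) => apply isd_nx2
  | ny2 => apply isd_ny2
  | (fun v => ny2 v) => apply isd_ny2
  | xy => apply isd_xy
  | (fun v => xy v) => apply isd_xy
  | (fun v => Dn v ?x) => apply isd_Dn
  | (fun v => Dm v ?x) => apply isd_Dm
  | (fun v => Dp v ?x) => apply isd_Dp
  | AA => apply isd_AA
  | (fun v => AA v) => apply isd_AA
  | BB => apply isd_BB
  | (fun v => BB v) => apply isd_BB
  | QQ => apply isd_QQ
  | (fun v => QQ v) => apply isd_QQ
  | sq => (eapply isd_sq; eassumption)
  | (fun v => sq v) => (eapply isd_sq; eassumption)
  | uu => (eapply isd_uu; eassumption)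
  | (fun v => uu v) => (eapply isd_uu; eassumption)
  | Fc => (eapply isd_Fc; eassumption)
  | (fun v => Fc v) => (eapply isd_Fc; eassumption)
  | MM => apply isd_MM
  | (fun v => MM v) => apply isd_MM
  | KK => apply isd_KK
  | (fun v => KK v) => apply isd_KK
  | ph => (eapply isd_ph; eassumption)
  | (fun v => ph v) => (eapply isd_ph; eassumption)
  | Rq1 => (eapply isd_R1; eassumption)
  | (fun v => Rq1 v) => (eapply isd_R1; eassumption)
  | Rq2 => (eapply isd_R2; eassumption)
  | (fun v => Rq2 v) => (eapply isd_R2; eassumption)
  | PP => (eapply isd_PP; eassumption)
  | (fun v => PP v) => (eapply isd_PP; eassumption)
  | (fun v => sq v / AA v) => (eapply isd_al; eassumption)
  | (fun v => DA v ?x) => apply isd_DA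
  | (fun v => DQ v ?x) => apply isd_DQ
  end end.
Lemma isd_Ds d e w : UU w -> isd (fun v => Ds v d) e w (DDs w d e).
Proof. intro H; posf H. unfold Ds. D. all: cbv beta. all: try nz.
 unfold DDs, Ds; field; repeat split; nz. Qed.
Ltac leaf ::= lazymatch goal with |- isd ?f _ _ _ => lazymatch f with
  | nx2 => apply isd_nx2
  | (fun v => nx2 v) => apply isd_nx2
  | ny2 => apply isd_ny2
  | (fun v => ny2 v) => apply isd_ny2
  | xy => apply isd_xy
  | (fun v => xy v) => apply isd_xy
  | (fun v => Dn v ?x) => apply isd_Dn
  | (fun v => Dm v ?x) => apply isd_Dm
  | (fun v => Dp v ?x) => apply isd_Dp
  | AA => apply isd_AA
  | (fun v => AA v) => apply isd_AA
  | BB => apply isd_BB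
  | (fun v => BB v) => apply isd_BB
  | QQ => apply isd_QQ
  | (fun v => QQ v) => apply isd_QQ
  | sq => (eapply isd_sq; eassumption)
  | (fun v => sq v) => (eapply isd_sq; eassumption)
  | uu => (eapply isd_uu; eassumption)
  | (fun v => uu v) => (eapply isd_uu; eassumption)
  | Fc => (eapply isd_Fc; eassumption)
  | (fun v => Fc v) => (eapply isd_Fc; eassumption)
  | MM => apply isd_MM
  | (fun v => MM v) => apply isd_MM
  | KK => apply isd_KK
  | (fun v => KK v) => apply isd_KK
  | ph => (eapply isd_ph; eassumption)
  | (fun v => ph v) => (eapply isd_ph; eassumption)
  | Rq1 => (eapply isd_R1; eassumption)
  | (fun v => Rq1 v) => (eapply isd_R1; eassumption)
  | Rq2 => (eapply isd_R2; eassumption)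
  | (fun v => Rq2 v) => (eapply isd_R2; eassumption)
  | PP => (eapply isd_PP; eassumption)
  | (fun v => PP v) => (eapply isd_PP; eassumption)
  | (fun v => sq v / AA v) => (eapply isd_al; eassumption)
  | (fun v => DA v ?x) => apply isd_DA
  | (fun v => DQ v ?x) => apply isd_DQ
  | (fun v => Ds v ?x) => (eapply isd_Ds; eassumption)
  end end.
Lemma isd_Du d e w : UU w -> isd (fun v => Du v d) e w (DDu w d e).
Proof. intro H; posf H. unfold Du. D. all: cbv beta. all: try nz.
 unfold DDu, Du; field; repeat split; nz. Qed.
Ltac leaf ::= lazymatch goal with |- isd ?f _ _ _ => lazymatch f with
  | nx2 => apply isd_nx2
  | (fun v => nx2 v) => apply isd_nx2
  | ny2 => apply isd_ny2
  | (fun v => ny2 v) => apply isd_ny2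
  | xy => apply isd_xy
  | (fun v => xy v) => apply isd_xy
  | (fun v => Dn v ?x) => apply isd_Dn
  | (fun v => Dm v ?x) => apply isd_Dm
  | (fun v => Dp v ?x) => apply isd_Dp
  | AA => apply isd_AA
  | (fun v => AA v) => apply isd_AA
  | BB => apply isd_BB
  | (fun v => BB v) => apply isd_BB
  | QQ => apply isd_QQ
  | (fun v => QQ v) => apply isd_QQ
  | sq => (eapply isd_sq; eassumption)
  | (fun v => sq v) => (eapply isd_sq; eassumption)
  | uu => (eapply isd_uu; eassumption)
  | (fun v => uu v) => (eapply isd_uu; eassumption)
  | Fc => (eapply isd_Fc; eassumption)
  | (fun v => Fc v) => (eapply isd_Fc; eassumption)
  | MM => apply isd_MM
  | (fun v => MM v) => apply isd_MM
  | KK => apply isd_KK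
  | (fun v => KK v) => apply isd_KK
  | ph => (eapply isd_ph; eassumption)
  | (fun v => ph v) => (eapply isd_ph; eassumption)
  | Rq1 => (eapply isd_R1; eassumption)
  | (fun v => Rq1 v) => (eapply isd_R1; eassumption)
  | Rq2 => (eapply isd_R2; eassumption)
  | (fun v => Rq2 v) => (eapply isd_R2; eassumption)
  | PP => (eapply isd_PP; eassumption)
  | (fun v => PP v) => (eapply isd_PP; eassumption)
  | (fun v => sq v / AA v) => (eapply isd_al; eassumption)
  | (fun v => DA v ?x) => apply isd_DA
  | (fun v => DQ v ?x) => apply isd_DQ
  | (fun v => Ds v ?x) => (eapply isd_Ds; eassumption)
  | (fun v => Du v ?x) => (eapply isd_Du; eassumption)
  end end.
Lemma isd_DF d e w : UU w -> isd (fun v => DF v d) e w (DDF w d e).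
Proof. intro H; posf H. unfold DF. D. all: cbv beta. all: try nz.
 unfold DDF, DF; field; repeat split; nz. Qed.
Ltac leaf ::= lazymatch goal with |- isd ?f _ _ _ => lazymatch f with
  | nx2 => apply isd_nx2
  | (fun v => nx2 v) => apply isd_nx2
  | ny2 => apply isd_ny2
  | (fun v => ny2 v) => apply isd_ny2
  | xy => apply isd_xy
  | (fun v => xy v) => apply isd_xy
  | (fun v => Dn v ?x) => apply isd_Dn
  | (fun v => Dm v ?x) => apply isd_Dm
  | (fun v => Dp v ?x) => apply isd_Dp
  | AA => apply isd_AA
  | (fun v => AA v) => apply isd_AA
  | BB => apply isd_BB
  | (fun v => BB v) => apply isd_BB
  | QQ => apply isd_QQ
  | (fun v => QQ v) => apply isd_QQ
  | sq => (eapply isd_sq; eassumption)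
  | (fun v => sq v) => (eapply isd_sq; eassumption)
  | uu => (eapply isd_uu; eassumption)
  | (fun v => uu v) => (eapply isd_uu; eassumption)
  | Fc => (eapply isd_Fc; eassumption)
  | (fun v => Fc v) => (eapply isd_Fc; eassumption)
  | MM => apply isd_MM
  | (fun v => MM v) => apply isd_MM
  | KK => apply isd_KK
  | (fun v => KK v) => apply isd_KK
  | ph => (eapply isd_ph; eassumption)
  | (fun v => ph v) => (eapply isd_ph; eassumption)
  | Rq1 => (eapply isd_R1; eassumption)
  | (fun v => Rq1 v) => (eapply isd_R1; eassumption)
  | Rq2 => (eapply isd_R2; eassumption)
  | (fun v => Rq2 v) => (eapply isd_R2; eassumption)
  | PP => (eapply isd_PP; eassumption)
  | (fun v => PP v) => (eapply isd_PP; eassumption)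
  | (fun v => sq v / AA v) => (eapply isd_al; eassumption)
  | (fun v => DA v ?x) => apply isd_DA
  | (fun v => DQ v ?x) => apply isd_DQ
  | (fun v => Ds v ?x) => (eapply isd_Ds; eassumption)
  | (fun v => Du v ?x) => (eapply isd_Du; eassumption)
  | (fun v => DF v ?x) => (eapply isd_DF; eassumption)
  end end.
Lemma isd_DM d e w : isd (fun v => DM v d) e w (DDM w d e).
Proof. unfold DM. D. all: cbv beta. all: try nz.
 unfold DDM; ring. Qed.
Ltac leaf ::= lazymatch goal with |- isd ?f _ _ _ => lazymatch f with
  | nx2 => apply isd_nx2
  | (fun v => nx2 v) => apply isd_nx2
  | ny2 => apply isd_ny2
  | (fun v => ny2 v) => apply isd_ny2
  | xy => apply isd_xy
  | (fun v => xy v) => apply isd_xy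
  | (fun v => Dn v ?x) => apply isd_Dn
  | (fun v => Dm v ?x) => apply isd_Dm
  | (fun v => Dp v ?x) => apply isd_Dp
  | AA => apply isd_AA
  | (fun v => AA v) => apply isd_AA
  | BB => apply isd_BB
  | (fun v => BB v) => apply isd_BB
  | QQ => apply isd_QQ
  | (fun v => QQ v) => apply isd_QQ
  | sq => (eapply isd_sq; eassumption)
  | (fun v => sq v) => (eapply isd_sq; eassumption)
  | uu => (eapply isd_uu; eassumption)
  | (fun v => uu v) => (eapply isd_uu; eassumption)
  | Fc => (eapply isd_Fc; eassumption)
  | (fun v => Fc v) => (eapply isd_Fc; eassumption)
  | MM => apply isd_MM
  | (fun v => MM v) => apply isd_MM
  | KK => apply isd_KK
  | (fun v => KK v) => apply isd_KK
  | ph => (eapply isd_ph; eassumption)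
  | (fun v => ph v) => (eapply isd_ph; eassumption)
  | Rq1 => (eapply isd_R1; eassumption)
  | (fun v => Rq1 v) => (eapply isd_R1; eassumption)
  | Rq2 => (eapply isd_R2; eassumption)
  | (fun v => Rq2 v) => (eapply isd_R2; eassumption)
  | PP => (eapply isd_PP; eassumption)
  | (fun v => PP v) => (eapply isd_PP; eassumption)
  | (fun v => sq v / AA v) => (eapply isd_al; eassumption)
  | (fun v => DA v ?x) => apply isd_DA
  | (fun v => DQ v ?x) => apply isd_DQ
  | (fun v => Ds v ?x) => (eapply isd_Ds; eassumption)
  | (fun v => Du v ?x) => (eapply isd_Du; eassumption)
  | (fun v => DF v ?x) => (eapply isd_DF; eassumption)
  | (fun v => DM v ?x) => apply isd_DM
  end end.
Lemma isd_DK d e w : isd (fun v => DK v d) e w (DDK w d e).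
Proof. unfold DK. D. all: cbv beta. all: try nz.
 unfold DDK; ring. Qed.
Ltac leaf ::= lazymatch goal with |- isd ?f _ _ _ => lazymatch f with
  | nx2 => apply isd_nx2
  | (fun v => nx2 v) => apply isd_nx2
  | ny2 => apply isd_ny2
  | (fun v => ny2 v) => apply isd_ny2
  | xy => apply isd_xy
  | (fun v => xy v) => apply isd_xy
  | (fun v => Dn v ?x) => apply isd_Dn
  | (fun v => Dm v ?x) => apply isd_Dm
  | (fun v => Dp v ?x) => apply isd_Dp
  | AA => apply isd_AA
  | (fun v => AA v) => apply isd_AA
  | BB => apply isd_BB
  | (fun v => BB v) => apply isd_BB
  | QQ => apply isd_QQ
  | (fun v => QQ v) => apply isd_QQ
  | sq => (eapply isd_sq; eassumption)
  | (fun v => sq v) => (eapply isd_sq; eassumption)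
  | uu => (eapply isd_uu; eassumption)
  | (fun v => uu v) => (eapply isd_uu; eassumption)
  | Fc => (eapply isd_Fc; eassumption)
  | (fun v => Fc v) => (eapply isd_Fc; eassumption)
  | MM => apply isd_MM
  | (fun v => MM v) => apply isd_MM
  | KK => apply isd_KK
  | (fun v => KK v) => apply isd_KK
  | ph => (eapply isd_ph; eassumption)
  | (fun v => ph v) => (eapply isd_ph; eassumption)
  | Rq1 => (eapply isd_R1; eassumption)
  | (fun v => Rq1 v) => (eapply isd_R1; eassumption)
  | Rq2 => (eapply isd_R2; eassumption)
  | (fun v => Rq2 v) => (eapply isd_R2; eassumption)
  | PP => (eapply isd_PP; eassumption)
  | (fun v => PP v) => (eapply isd_PP; eassumption)
  | (fun v => sq v / AA v) => (eapply isd_al; eassumption)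
  | (fun v => DA v ?x) => apply isd_DA
  | (fun v => DQ v ?x) => apply isd_DQ
  | (fun v => Ds v ?x) => (eapply isd_Ds; eassumption)
  | (fun v => Du v ?x) => (eapply isd_Du; eassumption)
  | (fun v => DF v ?x) => (eapply isd_DF; eassumption)
  | (fun v => DM v ?x) => apply isd_DM
  | (fun v => DK v ?x) => apply isd_DK
  end end.
Lemma isd_Dph d e w : UU w -> isd (fun v => Dph v d) e w (DDph w d e).
Proof. intro H; posf H. unfold Dph. D. all: cbv beta. all: try nz.
 unfold DDph, Dph; field; repeat split; nz. Qed.
Ltac leaf ::= lazymatch goal with |- isd ?f _ _ _ => lazymatch f with
  | nx2 => apply isd_nx2
  | (fun v => nx2 v) => apply isd_nx2
  | ny2 => apply isd_ny2
  | (fun v => ny2 v) => apply isd_ny2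
  | xy => apply isd_xy
  | (fun v => xy v) => apply isd_xy
  | (fun v => Dn v ?x) => apply isd_Dn
  | (fun v => Dm v ?x) => apply isd_Dm
  | (fun v => Dp v ?x) => apply isd_Dp
  | AA => apply isd_AA
  | (fun v => AA v) => apply isd_AA
  | BB => apply isd_BB
  | (fun v => BB v) => apply isd_BB
  | QQ => apply isd_QQ
  | (fun v => QQ v) => apply isd_QQ
  | sq => (eapply isd_sq; eassumption)
  | (fun v => sq v) => (eapply isd_sq; eassumption)
  | uu => (eapply isd_uu; eassumption)
  | (fun v => uu v) => (eapply isd_uu; eassumption)
  | Fc => (eapply isd_Fc; eassumption)
  | (fun v => Fc v) => (eapply isd_Fc; eassumption)
  | MM => apply isd_MM
  | (fun v => MM v) => apply isd_MM
  | KK => apply isd_KK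
  | (fun v => KK v) => apply isd_KK
  | ph => (eapply isd_ph; eassumption)
  | (fun v => ph v) => (eapply isd_ph; eassumption)
  | Rq1 => (eapply isd_R1; eassumption)
  | (fun v => Rq1 v) => (eapply isd_R1; eassumption)
  | Rq2 => (eapply isd_R2; eassumption)
  | (fun v => Rq2 v) => (eapply isd_R2; eassumption)
  | PP => (eapply isd_PP; eassumption)
  | (fun v => PP v) => (eapply isd_PP; eassumption)
  | (fun v => sq v / AA v) => (eapply isd_al; eassumption)
  | (fun v => DA v ?x) => apply isd_DA
  | (fun v => DQ v ?x) => apply isd_DQ
  | (fun v => Ds v ?x) => (eapply isd_Ds; eassumption)
  | (fun v => Du v ?x) => (eapply isd_Du; eassumption)
  | (fun v => DF v ?x) => (eapply isd_DF; eassumption)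
  | (fun v => DM v ?x) => apply isd_DM
  | (fun v => DK v ?x) => apply isd_DK
  | (fun v => Dph v ?x) => (eapply isd_Dph; eassumption)
  end end.
Lemma isd_DR1 d e w : UU w -> isd (fun v => DRq1 v d) e w (DDRq1 w d e).
Proof. intro H; posf H. unfold DRq1. D. all: cbv beta. all: try nz.
 unfold DDRq1, DRq1; field; repeat split; nz. Qed.
Ltac leaf ::= lazymatch goal with |- isd ?f _ _ _ => lazymatch f with
  | nx2 => apply isd_nx2
  | (fun v => nx2 v) => apply isd_nx2
  | ny2 => apply isd_ny2
  | (fun v => ny2 v) => apply isd_ny2
  | xy => apply isd_xy
  | (fun v => xy v) => apply isd_xy
  | (fun v => Dn v ?x) => apply isd_Dn
  | (fun v => Dm v ?x) => apply isd_Dm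
  | (fun v => Dp v ?x) => apply isd_Dp
  | AA => apply isd_AA
  | (fun v => AA v) => apply isd_AA
  | BB => apply isd_BB
  | (fun v => BB v) => apply isd_BB
  | QQ => apply isd_QQ
  | (fun v => QQ v) => apply isd_QQ
  | sq => (eapply isd_sq; eassumption)
  | (fun v => sq v) => (eapply isd_sq; eassumption)
  | uu => (eapply isd_uu; eassumption)
  | (fun v => uu v) => (eapply isd_uu; eassumption)
  | Fc => (eapply isd_Fc; eassumption)
  | (fun v => Fc v) => (eapply isd_Fc; eassumption)
  | MM => apply isd_MM
  | (fun v => MM v) => apply isd_MM
  | KK => apply isd_KK
  | (fun v => KK v) => apply isd_KK
  | ph => (eapply isd_ph; eassumption)
  | (fun v => ph v) => (eapply isd_ph; eassumption)
  | Rq1 => (eapply isd_R1; eassumption)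
  | (fun v => Rq1 v) => (eapply isd_R1; eassumption)
  | Rq2 => (eapply isd_R2; eassumption)
  | (fun v => Rq2 v) => (eapply isd_R2; eassumption)
  | PP => (eapply isd_PP; eassumption)
  | (fun v => PP v) => (eapply isd_PP; eassumption)
  | (fun v => sq v / AA v) => (eapply isd_al; eassumption)
  | (fun v => DA v ?x) => apply isd_DA
  | (fun v => DQ v ?x) => apply isd_DQ
  | (fun v => Ds v ?x) => (eapply isd_Ds; eassumption)
  | (fun v => Du v ?x) => (eapply isd_Du; eassumption)
  | (fun v => DF v ?x) => (eapply isd_DF; eassumption)
  | (fun v => DM v ?x) => apply isd_DM
  | (fun v => DK v ?x) => apply isd_DK
  | (fun v => Dph v ?x) => (eapply isd_Dph; eassumption)
  | (fun v => DRq1 v ?x) => (eapply isd_DR1; eassumption)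
  end end.
Lemma isd_DR2 d e w : UU w -> isd (fun v => DRq2 v d) e w (DDRq2 w d e).
Proof. intro H; posf H. unfold DRq2. D. all: cbv beta. all: try nz.
 unfold DDRq2, DRq2; field; repeat split; nz. Qed.
Ltac leaf ::= lazymatch goal with |- isd ?f _ _ _ => lazymatch f with
  | nx2 => apply isd_nx2
  | (fun v => nx2 v) => apply isd_nx2
  | ny2 => apply isd_ny2
  | (fun v => ny2 v) => apply isd_ny2
  | xy => apply isd_xy
  | (fun v => xy v) => apply isd_xy
  | (fun v => Dn v ?x) => apply isd_Dn
  | (fun v => Dm v ?x) => apply isd_Dm
  | (fun v => Dp v ?x) => apply isd_Dp
  | AA => apply isd_AA
  | (fun v => AA v) => apply isd_AA
  | BB => apply isd_BB
  | (fun v => BB v) => apply isd_BB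
  | QQ => apply isd_QQ
  | (fun v => QQ v) => apply isd_QQ
  | sq => (eapply isd_sq; eassumption)
  | (fun v => sq v) => (eapply isd_sq; eassumption)
  | uu => (eapply isd_uu; eassumption)
  | (fun v => uu v) => (eapply isd_uu; eassumption)
  | Fc => (eapply isd_Fc; eassumption)
  | (fun v => Fc v) => (eapply isd_Fc; eassumption)
  | MM => apply isd_MM
  | (fun v => MM v) => apply isd_MM
  | KK => apply isd_KK
  | (fun v => KK v) => apply isd_KK
  | ph => (eapply isd_ph; eassumption)
  | (fun v => ph v) => (eapply isd_ph; eassumption)
  | Rq1 => (eapply isd_R1; eassumption)
  | (fun v => Rq1 v) => (eapply isd_R1; eassumption)
  | Rq2 => (eapply isd_R2; eassumption)
  | (fun v => Rq2 v) => (eapply isd_R2; eassumption)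
  | PP => (eapply isd_PP; eassumption)
  | (fun v => PP v) => (eapply isd_PP; eassumption)
  | (fun v => sq v / AA v) => (eapply isd_al; eassumption)
  | (fun v => DA v ?x) => apply isd_DA
  | (fun v => DQ v ?x) => apply isd_DQ
  | (fun v => Ds v ?x) => (eapply isd_Ds; eassumption)
  | (fun v => Du v ?x) => (eapply isd_Du; eassumption)
  | (fun v => DF v ?x) => (eapply isd_DF; eassumption)
  | (fun v => DM v ?x) => apply isd_DM
  | (fun v => DK v ?x) => apply isd_DK
  | (fun v => Dph v ?x) => (eapply isd_Dph; eassumption)
  | (fun v => DRq1 v ?x) => (eapply isd_DR1; eassumption)
  | (fun v => DRq2 v ?x) => (eapply isd_DR2; eassumption)
  end end.
Lemma isd_DP d e w : UU w -> isd (fun v => DP v d) e w (DDP w d e).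
Proof. intro H; posf H. unfold DP. D. all: cbv beta. all: try nz.
 unfold DDP; ring. Qed.
Ltac leaf ::= lazymatch goal with |- isd ?f _ _ _ => lazymatch f with
  | nx2 => apply isd_nx2
  | (fun v => nx2 v) => apply isd_nx2
  | ny2 => apply isd_ny2
  | (fun v => ny2 v) => apply isd_ny2
  | xy => apply isd_xy
  | (fun v => xy v) => apply isd_xy
  | (fun v => Dn v ?x) => apply isd_Dn
  | (fun v => Dm v ?x) => apply isd_Dm
  | (fun v => Dp v ?x) => apply isd_Dp
  | AA => apply isd_AA
  | (fun v => AA v) => apply isd_AA
  | BB => apply isd_BB
  | (fun v => BB v) => apply isd_BB
  | QQ => apply isd_QQ
  | (fun v => QQ v) => apply isd_QQ
  | sq => (eapply isd_sq; eassumption)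
  | (fun v => sq v) => (eapply isd_sq; eassumption)
  | uu => (eapply isd_uu; eassumption)
  | (fun v => uu v) => (eapply isd_uu; eassumption)
  | Fc => (eapply isd_Fc; eassumption)
  | (fun v => Fc v) => (eapply isd_Fc; eassumption)
  | MM => apply isd_MM
  | (fun v => MM v) => apply isd_MM
  | KK => apply isd_KK
  | (fun v => KK v) => apply isd_KK
  | ph => (eapply isd_ph; eassumption)
  | (fun v => ph v) => (eapply isd_ph; eassumption)
  | Rq1 => (eapply isd_R1; eassumption)
  | (fun v => Rq1 v) => (eapply isd_R1; eassumption)
  | Rq2 => (eapply isd_R2; eassumption)
  | (fun v => Rq2 v) => (eapply isd_R2; eassumption)
  | PP => (eapply isd_PP; eassumption)
  | (fun v => PP v) => (eapply isd_PP; eassumption)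
  | (fun v => sq v / AA v) => (eapply isd_al; eassumption)
  | (fun v => DA v ?x) => apply isd_DA
  | (fun v => DQ v ?x) => apply isd_DQ
  | (fun v => Ds v ?x) => (eapply isd_Ds; eassumption)
  | (fun v => Du v ?x) => (eapply isd_Du; eassumption)
  | (fun v => DF v ?x) => (eapply isd_DF; eassumption)
  | (fun v => DM v ?x) => apply isd_DM
  | (fun v => DK v ?x) => apply isd_DK
  | (fun v => Dph v ?x) => (eapply isd_Dph; eassumption)
  | (fun v => DRq1 v ?x) => (eapply isd_DR1; eassumption)
  | (fun v => DRq2 v ?x) => (eapply isd_DR2; eassumption)
  | (fun v => DP v ?x) => (eapply isd_DP; eassumption)
  end end.

(* ===== invariant tower: partial derivatives w.r.t. (n, m, p) = indices 0,1,2 ===== *)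
Definition iDn (w : pt) (d : nat) := delta d 0.
Definition iDm (w : pt) (d : nat) := delta d 1.
Definition iDp (w : pt) (d : nat) := delta d 2.
Definition iDDn (d e : nat) : R := 0.
Definition iDDm (d e : nat) : R := 0.
Definition iDDp (d e : nat) : R := 0.
Definition iDA (w : pt) d := - iDn w d.
Definition iDQ (w : pt) d := iDA w d * ny2 w + AA w * iDm w d + 2 * xy w * iDp w d.
Definition iDs (w : pt) d := iDQ w d / (2 * sq w).
Definition iDu (w : pt) d := (cc * iDp w d - uu w * iDA w d) / BB w.
Definition iDF (w : pt) d := (iDs w d + iDu w d - Fc w * iDA w d) / AA w.
Definition iDM (w : pt) d := iDA w d * ny2 w + BB w * iDm w d + 4 * xy w * iDp w d.
Definition iDK (w : pt) d := iDA w d * BB w ^ 2 + 2 * AA w * BB w * iDA w d.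
Definition iDph (w : pt) d := (cc * iDM w d - ph w * iDK w d) / KK w.
Definition iDRq1 (w : pt) d := (iDp w d - Rq1 w * iDA w d) / AA w.
Definition iDRq2 (w : pt) d := (iDph w d - Rq2 w * 2 * iDF w d) / (2 * Fc w).
Definition iDP (w : pt) d := iDRq1 w d + iDRq2 w d.
Definition iDal (w : pt) d := (iDs w d - (sq w / AA w) * iDA w d) / AA w.
Definition iDDA (d e : nat) := - iDDn d e.
Definition iDDQ (w : pt) d e := iDDA d e * ny2 w + iDA w d * iDm w e + iDA w e * iDm w d + AA w * iDDm d e
   + 2 * iDp w e * iDp w d + 2 * xy w * iDDp d e.
Definition iDDs (w : pt) d e := (iDDQ w d e - iDs w d * 2 * iDs w e) / (2 * sq w).
Definition iDDu (w : pt) d e := (cc * iDDp d e - iDu w e * iDA w d - uu w * iDDA d e - iDu w d * iDA w e) / BB w.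
Definition iDDF (w : pt) d e := (iDDs w d e + iDDu w d e - iDF w e * iDA w d - Fc w * iDDA d e - iDF w d * iDA w e) / AA w.
Definition iDDM (w : pt) d e := iDDA d e * ny2 w + iDA w d * iDm w e + iDA w e * iDm w d + BB w * iDDm d e
   + 4 * iDp w e * iDp w d + 4 * xy w * iDDp d e.
Definition iDDK (w : pt) d e := iDDA d e * BB w ^ 2 + 2 * iDA w d * BB w * iDA w e + 2 * iDA w e * BB w * iDA w d
   + 2 * AA w * iDA w e * iDA w d + 2 * AA w * BB w * iDDA d e.
Definition iDDph (w : pt) d e := (cc * iDDM w d e - iDph w e * iDK w d - ph w * iDDK w d e - iDph w d * iDK w e) / KK w.
Definition iDDRq1 (w : pt) d e := (iDDp d e - iDRq1 w e * iDA w d - Rq1 w * iDDA d e - iDRq1 w d * iDA w e) / AA w.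
Definition iDDRq2 (w : pt) d e := (iDDph w d e - iDRq2 w e * 2 * iDF w d - Rq2 w * 2 * iDDF w d e - iDRq2 w d * 2 * iDF w e) / (2 * Fc w).
Definition iDDP (w : pt) d e := iDDRq1 w d e + iDDRq2 w d e.

Definition Dv (w : pt) (a d : nat) := match a with 0%nat => Dn w d | 1%nat => Dm w d | _ => Dp w d end.
Definition ch1 (f : nat -> R) (w : pt) d := f 0%nat * Dn w d + f 1%nat * Dm w d + f 2%nat * Dp w d.
Definition ch2 (f : nat -> R) (g : nat -> nat -> R) (w : pt) d e :=
  f 0%nat * DDn d e + f 1%nat * DDm d e + f 2%nat * DDp d e
  + (g 0%nat 0%nat * Dv w 0 d * Dv w 0 e + g 0%nat 1%nat * Dv w 0 d * Dv w 1 e + g 0%nat 2%nat * Dv w 0 d * Dv w 2 e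
  + g 1%nat 0%nat * Dv w 1 d * Dv w 0 e + g 1%nat 1%nat * Dv w 1 d * Dv w 1 e + g 1%nat 2%nat * Dv w 1 d * Dv w 2 e
  + g 2%nat 0%nat * Dv w 2 d * Dv w 0 e + g 2%nat 1%nat * Dv w 2 d * Dv w 1 e + g 2%nat 2%nat * Dv w 2 d * Dv w 2 e).

Ltac cbase := cbv [Dv iDn iDm iDp iDDn iDDm iDDp delta Nat.eqb].
Lemma CDA w d : DA w d = ch1 (iDA w) w d.
Proof. unfold DA.  unfold ch1. unfold iDA. cbase. unfold Rdiv. ring. Qed.
Lemma CDQ w d : DQ w d = ch1 (iDQ w) w d.
Proof. unfold DQ. rewrite ?(CDA w). unfold ch1. unfold iDQ. cbase. unfold Rdiv. ring. Qed.
Lemma CDs w d : Ds w d = ch1 (iDs w) w d.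
Proof. unfold Ds. rewrite ?(CDQ w). unfold ch1. unfold iDs. cbase. unfold Rdiv. ring. Qed.
Lemma CDu w d : Du w d = ch1 (iDu w) w d.
Proof. unfold Du. rewrite ?(CDA w). unfold ch1. unfold iDu. cbase. unfold Rdiv. ring. Qed.
Lemma CDF w d : DF w d = ch1 (iDF w) w d.
Proof. unfold DF. rewrite ?(CDA w). rewrite ?(CDs w). rewrite ?(CDu w). unfold ch1. unfold iDF. cbase. unfold Rdiv. ring. Qed.
Lemma CDM w d : DM w d = ch1 (iDM w) w d.
Proof. unfold DM. rewrite ?(CDA w). unfold ch1. unfold iDM. cbase. unfold Rdiv. ring. Qed.
Lemma CDK w d : DK w d = ch1 (iDK w) w d.
Proof. unfold DK. rewrite ?(CDA w). unfold ch1. unfold iDK. cbase. unfold Rdiv. ring. Qed.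
Lemma CDph w d : Dph w d = ch1 (iDph w) w d.
Proof. unfold Dph. rewrite ?(CDM w). rewrite ?(CDK w). unfold ch1. unfold iDph. cbase. unfold Rdiv. ring. Qed.
Lemma CDRq1 w d : DRq1 w d = ch1 (iDRq1 w) w d.
Proof. unfold DRq1. rewrite ?(CDA w). unfold ch1. unfold iDRq1. cbase. unfold Rdiv. ring. Qed.
Lemma CDRq2 w d : DRq2 w d = ch1 (iDRq2 w) w d.
Proof. unfold DRq2. rewrite ?(CDF w). rewrite ?(CDph w). unfold ch1. unfold iDRq2. cbase. unfold Rdiv. ring. Qed.
Lemma CDP w d : DP w d = ch1 (iDP w) w d.
Proof. unfold DP. rewrite ?(CDRq1 w). rewrite ?(CDRq2 w). unfold ch1. unfold iDP. cbase. unfold Rdiv. ring. Qed.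
Lemma CDal w d : Dal w d = ch1 (iDal w) w d.
Proof. unfold Dal. rewrite ?(CDA w). rewrite ?(CDs w). unfold ch1. unfold iDal. cbase. unfold Rdiv. ring. Qed.
Lemma CCDA w d e : DDA d e = ch2 (iDA w) (fun a b => iDDA a b) w d e.
Proof. unfold DDA.  unfold ch1, ch2. unfold iDDA, iDA. cbase. unfold Rdiv. ring. Qed.
Lemma CCDQ w d e : DDQ w d e = ch2 (iDQ w) (iDDQ w) w d e.
Proof. unfold DDQ. rewrite ?(CDA w). rewrite ?(CCDA w). unfold ch1, ch2. unfold iDDQ, iDQ. cbase. unfold Rdiv. ring. Qed.
Lemma CCDs w d e : DDs w d e = ch2 (iDs w) (iDDs w) w d e.
Proof. unfold DDs. rewrite ?(CDs w). rewrite ?(CCDQ w). unfold ch1, ch2. unfold iDDs, iDs. cbase. unfold Rdiv. ring. Qed.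
Lemma CCDu w d e : DDu w d e = ch2 (iDu w) (iDDu w) w d e.
Proof. unfold DDu. rewrite ?(CDA w). rewrite ?(CDu w). rewrite ?(CCDA w). unfold ch1, ch2. unfold iDDu, iDu. cbase. unfold Rdiv. ring. Qed.
Lemma CCDF w d e : DDF w d e = ch2 (iDF w) (iDDF w) w d e.
Proof. unfold DDF. rewrite ?(CDA w). rewrite ?(CDF w). rewrite ?(CCDA w). rewrite ?(CCDs w). rewrite ?(CCDu w). unfold ch1, ch2. unfold iDDF, iDF. cbase. unfold Rdiv. ring. Qed.
Lemma CCDM w d e : DDM w d e = ch2 (iDM w) (iDDM w) w d e.
Proof. unfold DDM. rewrite ?(CDA w). rewrite ?(CCDA w). unfold ch1, ch2. unfold iDDM, iDM. cbase. unfold Rdiv. ring. Qed.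
Lemma CCDK w d e : DDK w d e = ch2 (iDK w) (iDDK w) w d e.
Proof. unfold DDK. rewrite ?(CDA w). rewrite ?(CCDA w). unfold ch1, ch2. unfold iDDK, iDK. cbase. unfold Rdiv. ring. Qed.
Lemma CCDph w d e : DDph w d e = ch2 (iDph w) (iDDph w) w d e.
Proof. unfold DDph. rewrite ?(CDK w). rewrite ?(CDph w). rewrite ?(CCDM w). rewrite ?(CCDK w). unfold ch1, ch2. unfold iDDph, iDph. cbase. unfold Rdiv. ring. Qed.
Lemma CCDRq1 w d e : DDRq1 w d e = ch2 (iDRq1 w) (iDDRq1 w) w d e.
Proof. unfold DDRq1. rewrite ?(CDA w). rewrite ?(CDRq1 w). rewrite ?(CCDA w). unfold ch1, ch2. unfold iDDRq1, iDRq1. cbase. unfold Rdiv. ring. Qed.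
Lemma CCDRq2 w d e : DDRq2 w d e = ch2 (iDRq2 w) (iDDRq2 w) w d e.
Proof. unfold DDRq2. rewrite ?(CDF w). rewrite ?(CDRq2 w). rewrite ?(CCDF w). rewrite ?(CCDph w). unfold ch1, ch2. unfold iDDRq2, iDRq2. cbase. unfold Rdiv. ring. Qed.
Lemma CCDP w d e : DDP w d e = ch2 (iDP w) (iDDP w) w d e.
Proof. unfold DDP. rewrite ?(CCDRq1 w). rewrite ?(CCDRq2 w). unfold ch1, ch2. unfold iDDP, iDP. cbase. unfold Rdiv. ring. Qed.

Definition tauc k w := (1 - rK^2)*(xc k w * ny2 w - yc k w * xy w)/(Fc w * (rK^2 - nx2 w)^2 * (1 - nx2 w)).
Definition SSc w := 3 * (ph w / (2 * Fc w))^2 - psiF w / (2 * Fc w).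

Ltac unf_inv := unfold SSc, psiF, iDal, iDDP, iDP, iDDRq2, iDRq2, iDDRq1, iDRq1, iDDph, iDph, iDDK, iDK, iDDM, iDM,
  iDDF, iDF, iDDu, iDu, iDDs, iDs, iDDQ, iDQ, iDDA, iDA, iDDn, iDDm, iDDp, iDn, iDm, iDp,
  PP, Rq2, Rq1, ph, KK, MM, Fc, uu, AA, BB, cc in *.

Ltac sc := repeat split; first [apply Rgt_not_eq; lra | apply Rlt_not_eq; lra | apply Rgt_not_eq; nra | apply Rlt_not_eq; nra | idtac].

Ltac alg_inv w H :=
  let Hs := fresh "Hs" in let Hm := fresh "Hm" in let P4 := fresh "P4" in let P5 := fresh "P5" in
  posf H; pose proof (sq_sq _ H) as Hs; pose proof rK2_bounds;
  assert (P4 : 0 < sq w ^ 2 - xy w ^ 2) by (rewrite Hs; unfold QQ; destruct H; nra);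
  assert (P5 : 0 < (1 - nx2 w) * sq w + (1 - rK ^ 2) * xy w)
    by (replace ((1 - nx2 w) * sq w + (1 - rK ^ 2) * xy w) with (BB w * AA w * Fc w)
          by (unfold Fc, uu, BB, AA, cc in *; field; repeat split; apply Rgt_not_eq; lra);
        apply Rmult_lt_0_compat; [apply Rmult_lt_0_compat|]; lra);
  destruct H; unfold QQ, AA in Hs;
  unf_inv; cbv [delta Nat.eqb] in *;
  set (r := rK ^ 2) in *; set (n := nx2 w) in *; set (m := ny2 w) in *; set (p := xy w) in *; set (s := sq w) in *;
  assert (Hm : m = (s ^ 2 - p ^ 2) / (r - n)) by (rewrite Hs; field; apply Rgt_not_eq; lra);
  rewrite Hm in *; clearbody r n m p s; clear Hm Hs.

Ltac fin := field; sc.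

Section Sc.
Variable w : pt.
Hypothesis H : UU w.
Lemma SF1 : 2 * iDF w 1 * ny2 w + iDF w 2 * xy w = Fc w.
Proof. alg_inv w H. fin. Qed.
Lemma GIx : iDF w 2 * (2 * iDF w 0 * xy w + iDF w 2 * ny2 w) + Fc w * (2 * iDDF w 2 0 * xy w + iDDF w 2 2 * ny2 w)
  - 2 * Fc w * iDF w 0 = 2 * PP w * Fc w * iDF w 2.
Proof. alg_inv w H. fin. Qed.
Lemma GIy : 2 * iDF w 1 * (2 * iDF w 0 * xy w + iDF w 2 * ny2 w) + Fc w * (iDF w 2 + 4 * iDDF w 1 0 * xy w + 2 * iDDF w 1 2 * ny2 w)
  - Fc w * iDF w 2 = 2 * PP w * Fc w * (2 * iDF w 1).
Proof. alg_inv w H. fin. Qed.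
Lemma EF2x : iDDF w 2 2 * xy w + 2 * iDDF w 1 2 * ny2 w = 0.
Proof. alg_inv w H. fin. Qed.
Lemma EF2y : 2 * iDDF w 2 1 * xy w + 4 * iDDF w 1 1 * ny2 w + 2 * iDF w 1 = 0.
Proof. alg_inv w H. fin. Qed.
Lemma DETs :
  let a := iDF w 2 ^ 2 + Fc w * iDDF w 2 2 in
  let b := 2 * iDF w 2 * iDF w 1 + 2 * Fc w * iDDF w 1 2 in
  let b' := 2 * iDF w 1 * iDF w 2 + 2 * Fc w * iDDF w 2 1 in
  let c := 4 * iDF w 1 ^ 2 + 4 * Fc w * iDDF w 1 1 in
  let d := 2 * Fc w * iDF w 1 in
  d ^ 2 + d * (a * nx2 w + (b + b') * xy w + c * ny2 w) + (a * c - b * b') * (nx2 w * ny2 w - xy w ^ 2)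
  = Fc w ^ 3 * rK ^ 2 / sq w ^ 3.
Proof. intros a b b' c d. unfold a, b, b', c, d. alg_inv w H. fin. Qed.
Lemma EP1s : iDP w 2 * xy w + 2 * iDP w 1 * ny2 w = PP w.
Proof. alg_inv w H. fin. Qed.
Lemma EP2x : iDDP w 2 2 * xy w + 2 * iDDP w 2 1 * ny2 w = 0.
Proof. alg_inv w H. fin. Qed.
Lemma EP2y : 2 * iDDP w 1 2 * xy w + 4 * iDDP w 1 1 * ny2 w + 2 * iDP w 1 = 0.
Proof. alg_inv w H. fin. Qed.
Lemma EALs : iDal w 2 * xy w + 2 * iDal w 1 * ny2 w = sq w / AA w.
Proof. alg_inv w H. fin. Qed.
Lemma XAs : PP w ^ 2 - (2 * iDP w 0 * xy w + iDP w 2 * ny2 w) = SSc w - (sq w / AA w) ^ 2.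
Proof. alg_inv w H. fin. Qed.
Lemma XBx : 4 * iDP w 0 - (2 * iDDP w 2 0 * xy w + iDDP w 2 2 * ny2 w) - PP w * iDP w 2
  = sq w / AA w * iDal w 2 - SSc w * iDF w 2 / Fc w + cc * ny2 w / (Fc w * AA w ^ 2 * BB w).
Proof. alg_inv w H. fin. Qed.
Lemma XBy : 2 * iDP w 2 - iDP w 2 - (4 * iDDP w 1 0 * xy w + 2 * iDDP w 1 2 * ny2 w) - 2 * PP w * iDP w 1
  = 2 * (sq w / AA w) * iDal w 1 - 2 * SSc w * iDF w 1 / Fc w - cc * xy w / (Fc w * AA w ^ 2 * BB w).
Proof. alg_inv w H. fin. Qed.
End Sc.

Ltac ex := repeat first [rewrite CCDF | rewrite CDF | rewrite CCDP | rewrite CDP | rewrite CDal];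
  unfold ch1, ch2, Dv, Dn, Dm, Dp, DDn, DDm, DDp; cbv [delta Nat.eqb Nat.add].
Ltac crd := unfold ny2, nx2, xy, xc, yc; cbv [Nat.add]; ring.

Lemma EF1 w : UU w -> w 2%nat * DF w 2 + w 3%nat * DF w 3 = Fc w.
Proof. intro H. ex. transitivity (2 * iDF w 1 * ny2 w + iDF w 2 * xy w). crd. apply SF1; auto. Qed.

Lemma EF2 w l : UU w -> (l < 2)%nat -> DDF w 2 (2+l) * w 2%nat + DDF w 3 (2+l) * w 3%nat = 0.
Proof. intros H Hl. pose proof (EF2x w H). pose proof (EF2y w H).
 destruct l as [|[|]]; [| |lia]; ex.
 - transitivity (w 0%nat * (iDDF w 2 2 * xy w + 2 * iDDF w 1 2 * ny2 w)
     + w 2%nat * (2 * iDDF w 2 1 * xy w + 4 * iDDF w 1 1 * ny2 w + 2 * iDF w 1)). crd.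
   rewrite H0, H1; ring.
 - transitivity (w 1%nat * (iDDF w 2 2 * xy w + 2 * iDDF w 1 2 * ny2 w)
     + w 3%nat * (2 * iDDF w 2 1 * xy w + 4 * iDDF w 1 1 * ny2 w + 2 * iDF w 1)). crd.
   rewrite H0, H1; ring. Qed.

Lemma GI w l : UU w -> (l < 2)%nat ->
  (DF w 0 * DF w (2+l) + Fc w * DDF w (2+l) 0) * w 2%nat + (DF w 1 * DF w (2+l) + Fc w * DDF w (2+l) 1) * w 3%nat
   - Fc w * DF w l = 2 * PP w * Fc w * DF w (2+l).
Proof. intros H Hl. pose proof (GIx w H) as Gx. pose proof (GIy w H) as Gy.
 apply Rminus_diag_uniq.
 transitivity (w l * ((iDF w 2 * (2 * iDF w 0 * xy w + iDF w 2 * ny2 w) + Fc w * (2 * iDDF w 2 0 * xy w + iDDF w 2 2 * ny2 w)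
  - 2 * Fc w * iDF w 0) - 2 * PP w * Fc w * iDF w 2)
  + w (2+l)%nat * ((2 * iDF w 1 * (2 * iDF w 0 * xy w + iDF w 2 * ny2 w) + Fc w * (iDF w 2 + 4 * iDDF w 1 0 * xy w + 2 * iDDF w 1 2 * ny2 w)
  - Fc w * iDF w 2) - 2 * PP w * Fc w * (2 * iDF w 1))).
 - destruct l as [|[|]]; [| |lia]; ex; crd.
 - rewrite Gx, Gy. ring. Qed.

Lemma DET w : UU w ->
  (DF w 2 * DF w 2 + Fc w * DDF w 2 2) * (DF w 3 * DF w 3 + Fc w * DDF w 3 3)
  - (DF w 2 * DF w 3 + Fc w * DDF w 3 2) * (DF w 3 * DF w 2 + Fc w * DDF w 2 3)
  = Fc w ^ 3 * rK ^ 2 / sq w ^ 3.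
Proof. intro H. rewrite <- (DETs w H). cbv zeta. ex. crd. Qed.

Lemma EP1 w : UU w -> w 2%nat * DP w 2 + w 3%nat * DP w 3 = PP w.
Proof. intro H. ex. transitivity (iDP w 2 * xy w + 2 * iDP w 1 * ny2 w). crd. apply EP1s; auto. Qed.

Lemma EP2 w k : UU w -> (k < 2)%nat -> w 2%nat * DDP w (2+k) 2 + w 3%nat * DDP w (2+k) 3 = 0.
Proof. intros H Hk. pose proof (EP2x w H) as E1. pose proof (EP2y w H) as E2.
 transitivity (w k * (iDDP w 2 2 * xy w + 2 * iDDP w 2 1 * ny2 w)
   + w (2+k)%nat * (2 * iDDP w 1 2 * xy w + 4 * iDDP w 1 1 * ny2 w + 2 * iDP w 1)).
 - destruct k as [|[|]]; [| |lia]; ex; crd.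
 - rewrite E1, E2; ring. Qed.

Lemma EAL w : UU w -> w 2%nat * Dal w 2 + w 3%nat * Dal w 3 = sq w / AA w.
Proof. intro H. ex. transitivity (iDal w 2 * xy w + 2 * iDal w 1 * ny2 w). crd. apply EALs; auto. Qed.

Lemma TAU w : UU w -> tauc 0 w * w 2%nat + tauc 1 w * w 3%nat = 0.
Proof. intro H. pose proof (Fc_pos w H). pose proof (AA_pos w H). pose proof (BB_pos w H).
 unfold tauc, AA, BB in *. unfold ny2, xy, xc, yc in *. cbv [Nat.add]. field.
 repeat split; apply Rgt_not_eq; lra. Qed.

Lemma XA w : UU w -> PP w ^ 2 - (w 2%nat * DP w 0 + w 3%nat * DP w 1) = SSc w - (sq w / AA w) ^ 2.
Proof. intro H. rewrite <- (XAs w H). ex. crd. Qed.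

Lemma XB w k : UU w -> (k < 2)%nat ->
  2 * DP w k - (w 2%nat * DDP w (2+k) 0 + w 3%nat * DDP w (2+k) 1) - PP w * DP w (2+k)
  = (sq w / AA w) * Dal w (2+k) - SSc w * DF w (2+k) / Fc w + tauc k w.
Proof. intros H Hk. pose proof (XBx w H) as X1. pose proof (XBy w H) as X2.
 pose proof (Fc_pos w H). pose proof (AA_pos w H). pose proof (BB_pos w H).
 assert (Ht : tauc k w = w k * (cc * ny2 w / (Fc w * AA w ^ 2 * BB w)) - w (2+k)%nat * (cc * xy w / (Fc w * AA w ^ 2 * BB w))).
 { unfold tauc, cc, AA, BB in *. unfold xc, yc. field. repeat split; apply Rgt_not_eq; lra. }
 rewrite Ht. apply Rminus_diag_uniq.
 transitivity (w k * ((4 * iDP w 0 - (2 * iDDP w 2 0 * xy w + iDDP w 2 2 * ny2 w) - PP w * iDP w 2)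
   - (sq w / AA w * iDal w 2 - SSc w * iDF w 2 / Fc w + cc * ny2 w / (Fc w * AA w ^ 2 * BB w)))
  + w (2+k)%nat * ((2 * iDP w 2 - iDP w 2 - (4 * iDDP w 1 0 * xy w + 2 * iDDP w 1 2 * ny2 w) - 2 * PP w * iDP w 1)
   - (2 * (sq w / AA w) * iDal w 1 - 2 * SSc w * iDF w 1 / Fc w - cc * xy w / (Fc w * AA w ^ 2 * BB w)))).
 - destruct k as [|[|]]; [| |lia]; ex; unfold Rdiv; crd.
 - rewrite X1, X2. ring. Qed.

Lemma FF_eq v : UU v -> FF v = Fc v.
Proof. intro H; posf H. unfold FF, alphaF, betaF, Fc, uu, sq, QQ, AA, BB, cc in *. field; split; nz. Qed.

Lemma pd_FF2 d v : UU v -> pd d FF2 v = 2 * Fc v * DF v d.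
Proof. intro H. apply isd_pd. apply (isd_ext_loc _ (fun v => Fc v * Fc v)); auto.
 intros u Hu; unfold FF2; rewrite FF_eq; auto; ring. D. ring. Qed.

Lemma pd2_FF2 a b w : UU w -> pd a (pd b FF2) w = 2 * (DF w a * DF w b + Fc w * DDF w b a).
Proof. intro H. apply isd_pd. apply (isd_ext_loc _ (fun v => 2 * Fc v * DF v b)); auto.
 intros; apply pd_FF2; auto. D. ring. Qed.

Lemma gF_eq i j w : UU w -> gF i j w = DF w (2+i) * DF w (2+j) + Fc w * DDF w (2+j) (2+i).
Proof. intro H. unfold gF. rewrite pd2_FF2 by auto. field. Qed.

Lemma Gsp_eq i w : UU w -> (i < 2)%nat -> Gsp i w = PP w * w (2+i)%nat.
Proof. intros H Hi.
 pose proof (GI w 0 H ltac:(lia)) as G0. pose proof (GI w 1 H ltac:(lia)) as G1.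
 pose proof (EF1 w H) as E1. pose proof (EF2 w 0 H ltac:(lia)) as E20. pose proof (EF2 w 1 H ltac:(lia)) as E21.
 pose proof (DET w H) as Dt. pose proof (Fc_pos w H). pose proof (sq_pos w H). pose proof rK2_bounds.
 assert (Dn0 : Fc w ^ 3 * rK ^ 2 / sq w ^ 3 <> 0).
 { apply Rgt_not_eq. unfold Rdiv. apply Rmult_lt_0_compat. apply Rmult_lt_0_compat. apply pow_lt; lra. lra.
   apply Rinv_0_lt_compat, pow_lt; lra. }
 rewrite <- Dt in Dn0. clear Dt.
 unfold Gsp, sum2. rewrite !pd2_FF2, !pd_FF2 by auto. unfold ginv, detg. rewrite !gF_eq by auto.
 unfold yc. cbn [Nat.add] in *.
 assert (HX0 : 2 * (DF w 0 * DF w 2 + Fc w * DDF w 2 0) * w 2%nat + 2 * (DF w 1 * DF w 2 + Fc w * DDF w 2 1) * w 3%nat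
   - 2 * Fc w * DF w 0 = 4 * PP w * (Fc w * DF w 2)) by lra.
 assert (HX1 : 2 * (DF w 0 * DF w 3 + Fc w * DDF w 3 0) * w 2%nat + 2 * (DF w 1 * DF w 3 + Fc w * DDF w 3 1) * w 3%nat
   - 2 * Fc w * DF w 1 = 4 * PP w * (Fc w * DF w 3)) by lra.
 rewrite HX0, HX1.
 assert (HF2 : Fc w * DF w 2 = (DF w 2 * DF w 2 + Fc w * DDF w 2 2) * w 2%nat + (DF w 2 * DF w 3 + Fc w * DDF w 3 2) * w 3%nat).
 { transitivity (DF w 2 * (w 2%nat * DF w 2 + w 3%nat * DF w 3) + Fc w * (DDF w 2 2 * w 2%nat + DDF w 3 2 * w 3%nat)).
   rewrite E1, E20; ring. ring. }
 assert (HF3 : Fc w * DF w 3 = (DF w 3 * DF w 2 + Fc w * DDF w 2 3) * w 2%nat + (DF w 3 * DF w 3 + Fc w * DDF w 3 3) * w 3%nat).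
 { transitivity (DF w 3 * (w 2%nat * DF w 2 + w 3%nat * DF w 3) + Fc w * (DDF w 2 3 * w 2%nat + DDF w 3 3 * w 3%nat)).
   rewrite E1, E21; ring. ring. }
 rewrite HF2, HF3.
 destruct i as [|[|]]; [| |lia]; cbn [Nat.add]; field; auto.
Qed.

Lemma isd_Gsp i d w : UU w -> (i < 2)%nat -> isd (Gsp i) d w (DP w d * w (2+i)%nat + PP w * delta d (2+i)).
Proof. intros H Hi. apply (isd_ext_loc _ (fun v => PP v * v (2+i)%nat)); auto.
 intros; apply Gsp_eq; auto. D. ring. Qed.

Lemma pd2_Gsp i k e w : UU w -> (i < 2)%nat ->
  pd e (pd (2+k) (Gsp i)) w = DDP w (2+k) e * w (2+i)%nat + DP w (2+k) * delta e (2+i) + DP w e * delta (2+k) (2+i).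
Proof. intros H Hi. apply isd_pd.
 apply (isd_ext_loc _ (fun v => DP v (2+k) * v (2+i)%nat + PP v * delta (2+k) (2+i))); auto.
 intros; apply isd_pd, isd_Gsp; auto. D. ring. Qed.

Lemma pd_al d w : UU w -> pd d alphaF w = Dal w d.
Proof. intro H. apply isd_pd. apply (isd_ext_loc _ (fun v => sq v / AA v)); auto. eapply isd_al; eauto. Qed.

Lemma pd_FF d w : UU w -> pd d FF w = DF w d.
Proof. intro H. apply isd_pd. apply (isd_ext_loc _ Fc); auto. intros; apply FF_eq; auto. eapply isd_Fc; eauto. Qed.

Ltac fin2 z dl dpk yi kk :=
  apply Rminus_diag_uniq; transitivity ((2*PP z*dl - dpk*yi)*(z 2%nat * DP z 2 + z 3%nat * DP z 3 - PP z)
    + 2*PP z*yi*(z 2%nat * DDP z kk 2 + z 3%nat * DDP z kk 3));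
  [ring| match goal with E1 : _ = PP z, E2 : _ = 0 |- _ => rewrite E1, E2; ring end].

Theorem theorem4p2 : forall z : pt,
  nx2 z < rK ^ 2 ->
  (yc 0 z <> 0 \/ yc 1 z <> 0) ->
  (forall i k : nat, (i < 2)%nat -> (k < 2)%nat ->
     Riem i k z =
       - (delta i k * alphaF z ^ 2 - alphaF z * pd (2 + k) alphaF z * yc i z)
       + (3 * (phiF z / (2 * FF z)) ^ 2 - psiF z / (2 * FF z))
         * (delta i k - pd (2 + k) FF z / FF z * yc i z)
       + tauF k z * yc i z) /\
  Ric z = flagK z * FF z ^ 2 /\
  flagK z * FF z ^ 2 =
    3 * (phiF z / (2 * FF z)) ^ 2 - psiF z / (2 * FF z) - alphaF z ^ 2.
Proof.
 intros z Hn Hy.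
 assert (H : UU z).
 { split; auto. unfold ny2, yc. simpl. destruct Hy as [Hy|Hy]; [assert (0 < z 2%nat ^ 2) by (apply pow2_gt_0; auto) | assert (0 < z 3%nat ^ 2) by (apply pow2_gt_0; auto)]; nra. }
 pose proof (Fc_pos z H) as HF. pose proof (AA_pos z H). pose proof (BB_pos z H).
 assert (Hphi : phiF z = ph z) by reflexivity.
 assert (Htau : forall k, tauF k z = tauc k z) by (intro; unfold tauF, tauc; rewrite FF_eq; auto).
 assert (Hal : alphaF z = sq z / AA z) by reflexivity.
 assert (Hmain : forall i k : nat, (i < 2)%nat -> (k < 2)%nat ->
     Riem i k z =
       - (delta i k * alphaF z ^ 2 - alphaF z * pd (2 + k) alphaF z * yc i z)
       + (3 * (phiF z / (2 * FF z)) ^ 2 - psiF z / (2 * FF z))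
         * (delta i k - pd (2 + k) FF z / FF z * yc i z)
       + tauF k z * yc i z).
 { intros i k Hi Hk.
   rewrite pd_al, pd_FF, Htau, Hphi, FF_eq, Hal by auto.
   replace (3 * (ph z / (2 * Fc z)) ^ 2 - psiF z / (2 * Fc z)) with (SSc z) by reflexivity.
   pose proof (XA z H) as XA. pose proof (XB z k H Hk) as XB.
   pose proof (EP1 z H) as E1. pose proof (EP2 z k H Hk) as E2.
   unfold Riem, sum2. rewrite !pd2_Gsp by auto. rewrite !(isd_pd _ _ _ _ (isd_Gsp _ _ _ H Hi)).
   assert (h0 : (0 < 2)%nat) by lia. assert (h1 : (1 < 2)%nat) by lia.
   rewrite !(isd_pd _ _ _ _ (isd_Gsp _ _ _ H h0)).
   rewrite !(isd_pd _ _ _ _ (isd_Gsp _ _ _ H h1)).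
   rewrite !Gsp_eq by (auto; lia).
   unfold yc.
   replace (sq z / AA z * Dal z (2 + k)) with
     (2 * DP z k - (z 2%nat * DDP z (2 + k) 0 + z 3%nat * DDP z (2 + k) 1) - PP z * DP z (2 + k)
       + SSc z * DF z (2 + k) / Fc z - tauc k z) by lra.
   replace (SSc z) with (PP z ^ 2 - (z 2%nat * DP z 0 + z 3%nat * DP z 1) + (sq z / AA z) ^ 2) by lra.
   clear XA XB.
   unfold Rdiv.
   destruct i as [|[|]]; [| |lia]; destruct k as [|[|]]; try lia; cbv [delta Nat.eqb Nat.add] in *.
   - fin2 z 1 (DP z 2) (z 2%nat) 2%nat.
   - fin2 z 0 (DP z 3) (z 2%nat) 3%nat.
   - fin2 z 0 (DP z 2) (z 3%nat) 2%nat.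
   - fin2 z 1 (DP z 3) (z 3%nat) 3%nat. }
 assert (HR : Ric z = SSc z - (sq z / AA z) ^ 2).
 { unfold Ric, sum2. rewrite !Hmain by lia.
   rewrite !pd_al, !pd_FF, !Htau, Hphi, !FF_eq, Hal by auto.
   replace (3 * (ph z / (2 * Fc z)) ^ 2 - psiF z / (2 * Fc z)) with (SSc z) by reflexivity.
   pose proof (EAL z H) as EA. pose proof (EF1 z H) as EF. pose proof (TAU z H) as ET.
   unfold yc. cbv [delta Nat.eqb Nat.add] in *.
   apply Rminus_diag_uniq.
   transitivity (sq z / AA z * (z 2%nat * Dal z 2 + z 3%nat * Dal z 3 - sq z / AA z)
     - SSc z / Fc z * (z 2%nat * DF z 2 + z 3%nat * DF z 3 - Fc z) + (tauc 0 z * z 2%nat + tauc 1 z * z 3%nat)).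
   field; repeat split; apply Rgt_not_eq; lra. rewrite EA, EF, ET. ring. }
 assert (HFF : FF z <> 0) by (rewrite FF_eq by auto; apply Rgt_not_eq; lra).
 split; [exact Hmain|]. split.
 - unfold flagK. field. auto.
 - unfold flagK. rewrite HR, Hphi, FF_eq, Hal by auto. unfold SSc. rewrite FF_eq in HFF by auto. field. split; [apply Rgt_not_eq; lra|auto].
Qed.
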